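(* Let $\alpha>0$ and let $\gamma(s)=(x(s),0,z(s))$, $s\in I$, be a maximal solution of the system $$x'=\cos\psi,\quad z'=\sin\psi,\quad \psi'=\alpha\,\frac{z\cos\psi-x\sin\psi}{x^2+z^2}-\frac{\sin\psi}{x},$$ with initial conditions $(x(0),z(0))=(0,1)$, $\psi(0)=0$. Then $\gamma$ is a graph over the $x$-axis. Consequently, the surface of revolution about the $z$-axis generated by $\gamma$ is an entire graph over the plane $z=0$.
   Context: The system describes the arc-length parametrized generating curve $\gamma$ of a surface of revolution $(x(s)\cos t,x(s)\sin t,z(s))$ about the $z$-axis satisfying $H=\alpha\langle\nu,p\rangle/|p|^2$ ($H$ the sum of the principal curvatures), where $\psi$ is the angle of the tangent of $\gamma$. The system is singular at $x=0$; the initial conditions mean that $\gamma$ meets the $z$-axis orthogonally at $(0,0,1)$, the solution near $s=0$ being the profile of a $C^2$ rotational graph $z=u(r)$ with $u(0)=1$, $u'(0)=0$. *)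

(* Defs.v *)
From Stdlib Require Import Reals.
From Coquelicot Require Import Coquelicot.
Open Scope R_scope.

Definition in_oint (a b : Rbar) (s : R) : Prop := Rbar_lt a s /\ Rbar_lt s b.

(* (x,z,psi) solves, on the open interval (a,b) containing 0, the system
     x' = cos psi,  z' = sin psi,
     psi' = alpha (z cos psi - x sin psi)/(x^2+z^2) - sin psi / x
   with x(0)=0, z(0)=1, psi(0)=0.  The system is singular at x = 0, so the
   third equation is required for s <> 0 (where x(s) <> 0 is required);
   at s = 0 all three functions are still required to be differentiable
   (the solution is the profile of a C^2 rotational graph near s = 0). *)
Definition is_solution (alpha : R) (a b : Rbar) (x z psi : R -> R) : Prop :=
  Rbar_lt a 0 /\ Rbar_lt 0 b /\
  x 0 = 0 /\ z 0 = 1 /\ psi 0 = 0 /\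
  (forall s, in_oint a b s ->
     is_derive x s (cos (psi s)) /\ is_derive z s (sin (psi s)) /\
     ex_derive psi s) /\
  (forall s, in_oint a b s -> s <> 0 ->
     x s <> 0 /\
     is_derive psi s
       (alpha * (z s * cos (psi s) - x s * sin (psi s)) / (x s ^ 2 + z s ^ 2)
        - sin (psi s) / x s)).

Definition is_maximal_solution (alpha : R) (a b : Rbar) (x z psi : R -> R) : Prop :=
  is_solution alpha a b x z psi /\
  forall (a' b' : Rbar) (x' z' psi' : R -> R),
    is_solution alpha a' b' x' z' psi' ->
    Rbar_le a' a -> Rbar_le b b' ->
    (forall s, in_oint a b s -> x' s = x s /\ z' s = z s /\ psi' s = psi s) ->
    a' = a /\ b' = b.

(* Main.v *)
Require Import Defs.
From Stdlib Require Import Reals Lra Lia Psatz Classical.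
From Coquelicot Require Import Coquelicot.
Open Scope R_scope.

Lemma derive_cont f x l : is_derive f x l -> continuity_pt f x.
Proof. intros H. apply continuity_pt_filterlim. apply (ex_derive_continuous f x). eexists; eauto. Qed.

Lemma cont_eps f x : continuity_pt f x -> forall eps, 0 < eps ->
  exists d, 0 < d /\ forall y, Rabs (y - x) < d -> Rabs (f y - f x) < eps.
Proof.
  intros H eps He. destruct (H eps He) as [d [Hd H']]. exists d; split; auto.
  intros y Hy. destruct (Req_dec y x) as [->|Hne].
  - rewrite Rminus_diag, Rabs_R0; auto.
  - apply H'. split. split; [exact I| auto]. exact Hy.
Qed.

Lemma mvt (f df : R -> R) (a b : R) :
  a <= b -> (forall u, a <= u <= b -> is_derive f u (df u)) ->
  exists c, a <= c <= b /\ f b - f a = df c * (b - a).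
Proof.
  intros Hab Hd.
  destruct (MVT_gen f a b df) as [c [Hc Heq]].
  - intros u Hu. rewrite Rmin_left in Hu by lra; rewrite Rmax_right in Hu by lra. apply Hd; lra.
  - intros u Hu. rewrite Rmin_left in Hu by lra; rewrite Rmax_right in Hu by lra.
    apply derive_cont with (df u). apply Hd; lra.
  - rewrite Rmin_left in Hc by lra; rewrite Rmax_right in Hc by lra. exists c; split; auto.
Qed.

Lemma mvt_bound (f df : R -> R) (a b K : R) :
  a <= b -> (forall u, a <= u <= b -> is_derive f u (df u)) ->
  (forall u, a <= u <= b -> Rabs (df u) <= K) ->
  Rabs (f b - f a) <= K * (b - a).
Proof.
  intros Hab Hd HK. destruct (mvt f df a b Hab Hd) as [c [Hc Heq]].
  rewrite Heq, Rabs_mult, (Rabs_right (b-a)) by lra.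
  apply Rmult_le_compat_r; [lra|]. apply HK; lra.
Qed.

Lemma deriv_left_max f t l d : 0 < d -> is_derive f t l ->
  (forall u, t - d <= u < t -> f u <= f t) -> 0 <= l.
Proof.
  intros Hd Hder Hle. apply is_derive_Reals in Hder.
  destruct (Rle_or_lt 0 l) as [|Hl]; auto.
  destruct (Hder (-l/2) ltac:(lra)) as [del Hdel].
  pose proof (cond_pos del) as Hdp.
  set (h := - Rmin (del/2) d).
  assert (Hm1 : 0 < Rmin (del/2) d) by (apply Rmin_glb_lt; lra).
  assert (Hm2 : Rmin (del/2) d <= del/2) by apply Rmin_l.
  assert (Hm3 : Rmin (del/2) d <= d) by apply Rmin_r.
  assert (Hh0 : h <> 0) by (unfold h; lra).
  assert (Hh1 : Rabs h < del) by (unfold h; rewrite Rabs_left by lra; lra).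
  specialize (Hdel h Hh0 Hh1).
  specialize (Hle (t+h) ltac:(unfold h; lra)).
  set (q := (f (t + h) - f t) / h) in *.
  assert (Hq : q * h = f (t+h) - f t) by (unfold q; field; auto).
  assert (q < l/2). { apply Rabs_def2 in Hdel. lra. }
  assert (h < 0) by (unfold h; lra).
  nra.
Qed.

Lemma deriv_left_min f t l d : 0 < d -> is_derive f t l ->
  (forall u, t - d <= u < t -> f t <= f u) -> l <= 0.
Proof.
  intros Hd Hder Hle.
  assert (H := deriv_left_max (fun u => - f u) t (-l) d Hd).
  assert (0 <= -l); [|lra]. apply H.
  - apply (is_derive_opp f t l Hder).
  - intros u Hu. specialize (Hle u Hu). lra.
Qed.

Lemma first_cross (f : R -> R) a0 a1 K :
  a0 <= a1 -> (forall u, a0 <= u <= a1 -> continuity_pt f u) ->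
  f a0 < K -> K <= f a1 ->
  exists t, a0 < t <= a1 /\ f t = K /\ forall u, a0 <= u < t -> f u < K.
Proof.
  intros Ha Hc H0 H1.
  set (E := fun u => a0 <= u <= a1 /\ forall v, a0 <= v <= u -> f v < K).
  assert (HEb : bound E). { exists a1. intros u [Hu _]. lra. }
  assert (HE0 : exists u, E u). { exists a0. split. lra. intros v Hv. replace v with a0 by lra. auto. }
  destruct (completeness E HEb HE0) as [m [Hub Hlub]].
  assert (Hm0 : a0 <= m). { apply Hub. split. lra. intros v Hv. replace v with a0 by lra. auto. }
  assert (Hm1 : m <= a1). { apply Hlub. intros u [Hu _]. lra. }
  assert (P : forall u, a0 <= u < m -> f u < K).
  { intros u Hu. destruct (classic (exists e, E e /\ u < e)) as [[e [[He1 He2] Hue]]|Hn].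
    - apply He2. lra.
    - exfalso. assert (m <= u); [|lra]. apply Hlub. intros e He.
      destruct (Rle_or_lt e u); auto. exfalso; apply Hn; exists e; auto. }
  assert (Hge : K <= f m).
  { destruct (Rle_or_lt K (f m)) as [|Hlt]; auto. exfalso.
    destruct (Req_dec m a1) as [->|Hne]. lra.
    destruct (cont_eps f m (Hc m ltac:(lra)) (K - f m) ltac:(lra)) as [d [Hd Hd']].
    set (e := Rmin (m + d/2) a1).
    assert (He1 : e <= m + d/2) by apply Rmin_l.
    assert (He2 : e <= a1) by apply Rmin_r.
    assert (He3 : m < e) by (apply Rmin_glb_lt; lra).
    assert (E e).
    { split. lra. intros v Hv. destruct (Rlt_or_le v m). apply P; lra.
      assert (Hv' : Rabs (v - m) < d) by (rewrite Rabs_right; lra).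
      specialize (Hd' v Hv'). apply Rabs_def2 in Hd'. lra. }
    assert (e <= m) by (apply Hub; auto). lra. }
  assert (Hle : f m <= K).
  { destruct (Rle_or_lt (f m) K) as [|Hlt]; auto. exfalso.
    destruct (Req_dec m a0) as [Heq|Hne]. subst m. lra.
    destruct (cont_eps f m (Hc m ltac:(lra)) (f m - K) ltac:(lra)) as [d [Hd Hd']].
    set (e := Rmax (m - d/2) a0).
    assert (He1 : m - d/2 <= e) by apply Rmax_l.
    assert (He2 : a0 <= e) by apply Rmax_r.
    assert (He3 : e < m) by (apply Rmax_lub_lt; lra).
    assert (Hv' : Rabs (e - m) < d) by (rewrite Rabs_left; lra).
    specialize (Hd' e Hv'). apply Rabs_def2 in Hd'.
    specialize (P e ltac:(lra)). lra. }
  exists m. split; [|split; [lra|auto]].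
  split; auto. destruct (Req_dec m a0) as [Heq|]; [|lra]. subst m. lra.
Qed.

Definition Fp alpha x z p := alpha * (z * cos p - x * sin p) / (x ^ 2 + z ^ 2) - sin p / x.

Lemma in_oint_between a b s1 s2 c : in_oint a b s1 -> in_oint a b s2 -> s1 <= c <= s2 -> in_oint a b c.
Proof. unfold in_oint; destruct a, b; simpl; intros; lra. Qed.

Lemma in_oint_0 a b : Rbar_lt a 0 -> Rbar_lt 0 b -> in_oint a b 0.
Proof. unfold in_oint; auto. Qed.

Lemma in_oint_opp a b s : in_oint (Rbar_opp b) (Rbar_opp a) s <-> in_oint a b (-s).
Proof. unfold in_oint; destruct a, b; simpl; split; intros; lra. Qed.



Lemma is_derive_refl f s l : is_derive f (-s) l -> is_derive (fun u => f (-u)) s (-l).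
Proof.
  intros H. assert (Hg : is_derive Ropp s (-1)) by (auto_derive; auto; ring).
  pose proof (is_derive_comp f Ropp s l (-1) H Hg) as Hc.
  replace (-l) with (scal (-1) l); auto.
  unfold scal; simpl; unfold mult; simpl. ring.
Qed.

Lemma sol_basic alpha a b x z psi : is_solution alpha a b x z psi ->
  Rbar_lt a 0 /\ Rbar_lt 0 b /\ x 0 = 0 /\ z 0 = 1 /\ psi 0 = 0.
Proof. intros [H1 [H2 [H3 [H4 [H5 _]]]]]; auto. Qed.

Lemma sol_dx alpha a b x z psi s : is_solution alpha a b x z psi -> in_oint a b s ->
  is_derive x s (cos (psi s)).
Proof. intros [_ [_ [_ [_ [_ [H _]]]]]] Hs. apply (H s Hs). Qed.
Lemma sol_dz alpha a b x z psi s : is_solution alpha a b x z psi -> in_oint a b s ->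
  is_derive z s (sin (psi s)).
Proof. intros [_ [_ [_ [_ [_ [H _]]]]]] Hs. apply (H s Hs). Qed.
Lemma sol_edp alpha a b x z psi s : is_solution alpha a b x z psi -> in_oint a b s ->
  ex_derive psi s.
Proof. intros [_ [_ [_ [_ [_ [H _]]]]]] Hs. apply (H s Hs). Qed.
Lemma sol_xne alpha a b x z psi s : is_solution alpha a b x z psi -> in_oint a b s -> s <> 0 ->
  x s <> 0.
Proof. intros [_ [_ [_ [_ [_ [_ H]]]]]] Hs Hs0. apply (H s Hs Hs0). Qed.
Lemma sol_dp alpha a b x z psi s : is_solution alpha a b x z psi -> in_oint a b s -> s <> 0 ->
  is_derive psi s (Fp alpha (x s) (z s) (psi s)).
Proof. intros [_ [_ [_ [_ [_ [_ H]]]]]] Hs Hs0. apply (H s Hs Hs0). Qed.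

Lemma psi_cont alpha a b x z psi s : is_solution alpha a b x z psi -> in_oint a b s ->
  continuity_pt psi s.
Proof. intros H Hs. destruct (sol_edp _ _ _ _ _ _ _ H Hs) as [l Hl]. apply (derive_cont _ _ _ Hl). Qed.

Lemma reflect_sol alpha a b x z psi : is_solution alpha a b x z psi ->
  is_solution alpha (Rbar_opp b) (Rbar_opp a) (fun s => - x (- s)) (fun s => z (- s)) (fun s => - psi (- s)).
Proof.
  intros H. destruct (sol_basic _ _ _ _ _ _ H) as [Ha [Hb [Hx0 [Hz0 Hp0]]]].
  split; [destruct b; simpl in *; auto; lra|].
  split; [destruct a; simpl in *; auto; lra|].
  rewrite Ropp_0, Hx0, Hz0, Hp0. split; [ring|split; [auto|split; [ring|]]].
  split.
  - intros s Hs. apply in_oint_opp in Hs. split; [|split].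
    + rewrite cos_neg. replace (cos (psi (-s))) with (- - cos (psi (-s))) by ring.
      apply (is_derive_opp (fun u => x (-u))). apply is_derive_refl. apply (sol_dx _ _ _ _ _ _ _ H Hs).
    + rewrite sin_neg. apply is_derive_refl. apply (sol_dz _ _ _ _ _ _ _ H Hs).
    + destruct (sol_edp _ _ _ _ _ _ _ H Hs) as [l Hl]. exists (- - l).
      apply (is_derive_opp (fun u => psi (-u))). apply is_derive_refl. auto.
  - intros s Hs Hs0. apply in_oint_opp in Hs. assert (Hs0' : -s <> 0) by lra.
    pose proof (sol_xne _ _ _ _ _ _ _ H Hs Hs0') as Hxne.
    split; [intro; apply Hxne; lra|].
    pose proof (sol_dp _ _ _ _ _ _ _ H Hs Hs0') as Hd.
    assert (Hq : x (-s) ^ 2 + z (-s) ^ 2 <> 0) by (intro; apply Hxne; nra).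
    replace (alpha * (z (- s) * cos (- psi (- s)) - - x (- s) * sin (- psi (- s))) /
      ((- x (- s)) ^ 2 + z (- s) ^ 2) - sin (- psi (- s)) / - x (- s))
      with (- - Fp alpha (x (-s)) (z (-s)) (psi (-s))).
    + apply (is_derive_opp (fun u => psi (-u))). apply is_derive_refl. auto.
    + unfold Fp. rewrite cos_neg, sin_neg. field. split; auto.
      intro; apply Hxne; nra.
Qed.

Lemma reflect_max alpha a b x z psi : is_maximal_solution alpha a b x z psi ->
  is_maximal_solution alpha (Rbar_opp b) (Rbar_opp a) (fun s => - x (- s)) (fun s => z (- s)) (fun s => - psi (- s)).
Proof.
  intros [H Hm]. split; [apply reflect_sol; auto|].
  intros a' b' x' z' p' H' Ha Hb Hagree.
  destruct (Hm (Rbar_opp b') (Rbar_opp a') _ _ _ (reflect_sol _ _ _ _ _ _ H')) as [E1 E2].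
  - destruct a, b'; simpl in *; auto; lra.
  - destruct b, a'; simpl in *; auto; lra.
  - intros s Hs. assert (Hs' : in_oint (Rbar_opp b) (Rbar_opp a) (-s)).
    { apply in_oint_opp. rewrite Ropp_involutive. auto. }
    destruct (Hagree _ Hs') as [A1 [A2 A3]]. rewrite Ropp_involutive in A1, A2, A3.
    split; [|split]; lra.
  - split.
    + rewrite <- E2. rewrite Rbar_opp_involutive; auto.
    + rewrite <- E1. rewrite Rbar_opp_involutive; auto.
Qed.

Lemma abs_psi_cont alpha a b x z psi s : is_solution alpha a b x z psi -> in_oint a b s ->
  continuity_pt (fun u => Rabs (psi u)) s.
Proof.
  intros H Hs. apply (continuity_pt_comp psi Rabs). apply (psi_cont _ _ _ _ _ _ _ H Hs).
  apply Rcontinuity_abs.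
Qed.

Lemma Fp_PI2 alpha x z : 0 < alpha -> 0 < x -> Fp alpha x z (PI/2) < 0.
Proof.
  intros Ha Hx. unfold Fp. rewrite cos_PI2, sin_PI2.
  assert (0 < x^2 + z^2) by nra.
  assert (0 < alpha * x / (x^2+z^2)) by (apply Rdiv_lt_0_compat; nra).
  assert (0 < 1 / x) by (apply Rdiv_lt_0_compat; lra).
  replace (alpha * (z * 0 - x * 1) / (x ^ 2 + z ^ 2)) with (- (alpha * x / (x^2+z^2))) by (field; lra).
  lra.
Qed.

Lemma Fp_mPI2 alpha x z : 0 < alpha -> 0 < x -> 0 < Fp alpha x z (-(PI/2)).
Proof.
  intros Ha Hx. unfold Fp. rewrite cos_neg, sin_neg, cos_PI2, sin_PI2.
  assert (0 < x^2 + z^2) by nra.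
  assert (0 < alpha * x / (x^2+z^2)) by (apply Rdiv_lt_0_compat; nra).
  assert (0 < 1 / x) by (apply Rdiv_lt_0_compat; lra).
  replace (alpha * (z * 0 - x * - (1)) / (x ^ 2 + z ^ 2)) with (alpha * x / (x^2+z^2)) by (field; lra).
  replace (- (1) / x) with (- (1/x)) by (field; lra).
  lra.
Qed.

Lemma psi_pos_side alpha a b x z psi : 0 < alpha -> is_solution alpha a b x z psi ->
  forall s, 0 <= s -> in_oint a b s -> Rabs (psi s) < PI/2.
Proof.
  intros Hal H s1 Hs1 Hi1.
  destruct (sol_basic _ _ _ _ _ _ H) as [Ha [Hb [Hx0 [Hz0 Hp0]]]].
  destruct (Rlt_or_le (Rabs (psi s1)) (PI/2)) as [|Hge]; auto. exfalso.
  assert (HI : forall u, 0 <= u <= s1 -> in_oint a b u).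
  { intros u Hu. apply (in_oint_between a b 0 s1); auto. apply in_oint_0; auto. }
  destruct (first_cross (fun u => Rabs (psi u)) 0 s1 (PI/2) Hs1) as [t [Ht [Hpt Hbef]]].
  - intros u Hu. apply (abs_psi_cont _ _ _ _ _ _ _ H (HI u Hu)).
  - rewrite Hp0, Rabs_R0. pose proof PI2_1. lra.
  - auto.
  - assert (Hxt : 0 < x t).
    { destruct (mvt x (fun u => cos (psi u)) 0 (t/2)) as [c [Hc Hx1]]. lra.
      { intros u Hu. apply (sol_dx _ _ _ _ _ _ _ H). apply HI; lra. }
      destruct (mvt x (fun u => cos (psi u)) (t/2) t) as [c' [Hc' Hx2]]. lra.
      { intros u Hu. apply (sol_dx _ _ _ _ _ _ _ H). apply HI; lra. }
      assert (Hc1 : 0 < cos (psi c)).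
      { assert (Rabs (psi c) < PI/2) by (apply Hbef; lra). apply Rabs_def2 in H0.
        apply cos_gt_0; lra. }
      assert (Hc2 : 0 <= cos (psi c')).
      { assert (Rabs (psi c') <= PI/2).
        { destruct (Req_dec c' t) as [->|]. simpl in Hpt; lra. left. apply Hbef; lra. }
        apply Rabs_le_between in H0. apply cos_ge_0; lra. }
      nra. }
    assert (Ht0 : t <> 0) by lra.
    pose proof (sol_dp _ _ _ _ _ _ _ H (HI t ltac:(lra)) Ht0) as Hd.
    simpl in Hpt. destruct (Rle_or_lt 0 (psi t)) as [Hpos|Hneg].
    + rewrite Rabs_right in Hpt by lra. rewrite Hpt in Hd.
      assert (0 <= Fp alpha (x t) (z t) (PI/2)).
      { apply (deriv_left_max psi t _ t); auto. lra. intros u Hu.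
        specialize (Hbef u ltac:(lra)). apply Rabs_def2 in Hbef. lra. }
      pose proof (Fp_PI2 alpha (x t) (z t) Hal Hxt). lra.
    + rewrite Rabs_left in Hpt by lra. replace (psi t) with (-(PI/2)) in Hd by lra.
      assert (Fp alpha (x t) (z t) (-(PI/2)) <= 0).
      { apply (deriv_left_min psi t _ t); auto. lra. intros u Hu.
        specialize (Hbef u ltac:(lra)). apply Rabs_def2 in Hbef. lra. }
      pose proof (Fp_mPI2 alpha (x t) (z t) Hal Hxt). lra.
Qed.

Lemma psi_bound alpha a b x z psi : 0 < alpha -> is_solution alpha a b x z psi ->
  forall s, in_oint a b s -> Rabs (psi s) < PI/2.
Proof.
  intros Hal H s Hs. destruct (Rle_or_lt 0 s).
  - apply (psi_pos_side alpha a b x z psi); auto.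
  - pose proof (psi_pos_side _ _ _ _ _ _ Hal (reflect_sol _ _ _ _ _ _ H) (-s) ltac:(lra)) as Hr.
    simpl in Hr. rewrite Ropp_involutive, Rabs_Ropp in Hr. apply Hr.
    apply in_oint_opp. rewrite Ropp_involutive; auto.
Qed.

Lemma cos_psi_pos alpha a b x z psi : 0 < alpha -> is_solution alpha a b x z psi ->
  forall s, in_oint a b s -> 0 < cos (psi s).
Proof.
  intros Hal H s Hs. pose proof (psi_bound _ _ _ _ _ _ Hal H s Hs) as Hb.
  apply Rabs_def2 in Hb. apply cos_gt_0; lra.
Qed.

Lemma x_incr alpha a b x z psi : 0 < alpha -> is_solution alpha a b x z psi ->
  forall s1 s2, in_oint a b s1 -> in_oint a b s2 -> s1 < s2 -> x s1 < x s2.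
Proof.
  intros Hal H s1 s2 H1 H2 Hlt.
  destruct (mvt x (fun u => cos (psi u)) s1 s2) as [c [Hc Heq]]. lra.
  { intros u Hu. apply (sol_dx _ _ _ _ _ _ _ H). apply (in_oint_between a b s1 s2); auto. }
  assert (0 < cos (psi c)). { apply (cos_psi_pos _ _ _ _ _ _ Hal H). apply (in_oint_between a b s1 s2); auto. }
  nra.
Qed.

Lemma x_sign alpha a b x z psi : 0 < alpha -> is_solution alpha a b x z psi ->
  forall s, in_oint a b s -> (0 < s -> 0 < x s) /\ (s < 0 -> x s < 0).
Proof.
  intros Hal H s Hs. destruct (sol_basic _ _ _ _ _ _ H) as [Ha [Hb [Hx0 _]]].
  split; intros; rewrite <- Hx0.
  - apply (x_incr _ _ _ _ _ _ Hal H); auto. apply in_oint_0; auto.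
  - apply (x_incr _ _ _ _ _ _ Hal H); auto. apply in_oint_0; auto.
Qed.

Lemma lip1 f df a b K : (forall u, is_derive f u (df u)) -> (forall u, Rabs (df u) <= K) ->
  Rabs (f a - f b) <= K * Rabs (a - b).
Proof.
  intros Hd HK. destruct (Rle_or_lt b a).
  - rewrite (Rabs_right (a-b)) by lra. apply (mvt_bound f df b a K); auto.
  - rewrite <- Rabs_Ropp, Ropp_minus_distr, (Rabs_left (a-b)) by lra.
    replace (- (a-b)) with (b - a) by ring. apply (mvt_bound f df a b K); auto; lra.
Qed.

Lemma cos_lip a b : Rabs (cos a - cos b) <= Rabs (a - b).
Proof.
  rewrite <- (Rmult_1_l (Rabs (a-b))). apply (lip1 cos (fun u => - sin u)).
  - intros u. auto_derive; auto. ring.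
  - intros u. rewrite Rabs_Ropp. pose proof (SIN_bound u). apply Rabs_le; lra.
Qed.

Lemma sin_lip a b : Rabs (sin a - sin b) <= Rabs (a - b).
Proof.
  rewrite <- (Rmult_1_l (Rabs (a-b))). apply (lip1 sin cos).
  - intros u. auto_derive; auto. ring.
  - intros u. pose proof (COS_bound u). apply Rabs_le; lra.
Qed.


Definition Gf x z p := (z * cos p - x * sin p) / (x ^ 2 + z ^ 2).
Definition LG rho B := (1 + 2*B)/rho + 4 * B^2 / rho^2.
Definition Dst (x1 z1 p1 x2 z2 p2 : R) := Rabs (x1 - x2) + Rabs (z1 - z2) + Rabs (p1 - p2).

Lemma abs_prod_le u v U V : Rabs u <= U -> Rabs v <= V -> Rabs (u * v) <= U * V.
Proof. intros. rewrite Rabs_mult. apply Rmult_le_compat; auto; apply Rabs_pos. Qed.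

Lemma abs_div_le u Q U rho : 0 < rho -> rho <= Q -> Rabs u <= U -> Rabs (u / Q) <= U / rho.
Proof.
  intros Hr HQ Hu. unfold Rdiv. rewrite Rabs_mult, Rabs_inv, (Rabs_right Q) by lra.
  apply Rmult_le_compat; auto; try apply Rabs_pos.
  left; apply Rinv_0_lt_compat; lra. apply Rinv_le_contravar; lra.
Qed.

Lemma Fp_G alpha x z p : Fp alpha x z p = alpha * Gf x z p - sin p / x.
Proof. unfold Fp, Gf, Rdiv. ring. Qed.

Lemma Gf_bound rho B x z p : 0 < rho -> rho <= x^2 + z^2 -> Rabs x <= B -> Rabs z <= B ->
  Rabs (Gf x z p) <= 2 * B / rho.
Proof.
  intros Hr HQ Hx Hz. unfold Gf. apply abs_div_le; auto.
  unfold Rminus. eapply Rle_trans. apply Rabs_triang. rewrite Rabs_Ropp.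
  replace (2*B) with (B*1 + B*1) by ring.
  apply Rplus_le_compat; apply abs_prod_le; auto.
  pose proof (COS_bound p); apply Rabs_le; lra. pose proof (SIN_bound p); apply Rabs_le; lra.
Qed.

Lemma abs4 a b c d : Rabs (a + b + c + d) <= Rabs a + Rabs b + Rabs c + Rabs d.
Proof.
  eapply Rle_trans. apply Rabs_triang. eapply Rle_trans. apply Rplus_le_compat_r. apply Rabs_triang.
  eapply Rle_trans. apply Rplus_le_compat_r. apply Rplus_le_compat_r. apply Rabs_triang. lra.
Qed.

Lemma Gf_lip rho B x1 z1 p1 x2 z2 p2 : 0 < rho -> rho <= x1^2 + z1^2 -> rho <= x2^2 + z2^2 ->
  Rabs x1 <= B -> Rabs z1 <= B -> Rabs x2 <= B -> Rabs z2 <= B ->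
  Rabs (Gf x1 z1 p1 - Gf x2 z2 p2) <= LG rho B * Dst x1 z1 p1 x2 z2 p2.
Proof.
  intros Hr HQ1 HQ2 Hx1 Hz1 Hx2 Hz2. unfold Gf, LG, Dst.
  set (N1 := z1 * cos p1 - x1 * sin p1). set (N2 := z2 * cos p2 - x2 * sin p2).
  set (Q1 := x1^2 + z1^2). set (Q2 := x2^2+z2^2).
  set (D := Rabs (x1 - x2) + Rabs (z1 - z2) + Rabs (p1 - p2)).
  assert (HB : 0 <= B) by (pose proof (Rabs_pos x1); lra).
  assert (HD : 0 <= D) by (unfold D; pose proof (Rabs_pos (x1-x2)); pose proof (Rabs_pos (z1-z2)); pose proof (Rabs_pos (p1-p2)); lra).
  assert (Hc1 : Rabs (cos p1) <= 1) by (pose proof (COS_bound p1); apply Rabs_le; lra).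
  assert (Hs1 : Rabs (sin p1) <= 1) by (pose proof (SIN_bound p1); apply Rabs_le; lra).
  assert (HN : Rabs (N1 - N2) <= (1 + 2*B) * D).
  { replace (N1 - N2) with ((z1 - z2) * cos p1 + z2 * (cos p1 - cos p2) + (-((x1 - x2) * sin p1)) + - (x2 * (sin p1 - sin p2))) by (unfold N1, N2; ring).
    eapply Rle_trans. apply abs4. rewrite !Rabs_Ropp.
    pose proof (abs_prod_le (z1 - z2) (cos p1) _ _ (Rle_refl _) Hc1).
    pose proof (abs_prod_le z2 (cos p1 - cos p2) _ _ Hz2 (cos_lip p1 p2)).
    pose proof (abs_prod_le (x1 - x2) (sin p1) _ _ (Rle_refl _) Hs1).
    pose proof (abs_prod_le x2 (sin p1 - sin p2) _ _ Hx2 (sin_lip p1 p2)).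
    unfold D. assert (0 <= B * Rabs (x1 - x2)) by (apply Rmult_le_pos; auto; apply Rabs_pos). assert (0 <= B * Rabs (z1 - z2)) by (apply Rmult_le_pos; auto; apply Rabs_pos). pose proof (Rabs_pos (p1 - p2)). lra. }
  assert (HQ : Rabs (Q2 - Q1) <= 2 * B * D).
  { replace (Q2 - Q1) with (-((x1 + x2) * (x1 - x2)) + - ((z1 + z2) * (z1 - z2))) by (unfold Q1, Q2; ring).
    eapply Rle_trans. apply Rabs_triang. rewrite !Rabs_Ropp.
    assert (Rabs (x1 + x2) <= 2 * B) by (eapply Rle_trans; [apply Rabs_triang|lra]).
    assert (Rabs (z1 + z2) <= 2 * B) by (eapply Rle_trans; [apply Rabs_triang|lra]).
    pose proof (abs_prod_le (x1 + x2) (x1 - x2) _ _ H (Rle_refl _)).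
    pose proof (abs_prod_le (z1 + z2) (z1 - z2) _ _ H0 (Rle_refl _)).
    unfold D. pose proof (Rabs_pos (p1 - p2)). nra. }
  assert (HN2 : Rabs N2 <= 2 * B).
  { unfold N2. unfold Rminus. eapply Rle_trans. apply Rabs_triang. rewrite Rabs_Ropp.
    replace (2*B) with (B*1 + B*1) by ring.
    apply Rplus_le_compat; apply abs_prod_le; auto.
    pose proof (COS_bound p2); apply Rabs_le; lra. pose proof (SIN_bound p2); apply Rabs_le; lra. }
  assert (HQ1' : 0 < Q1) by (unfold Q1 in *; lra).
  assert (HQ2' : 0 < Q2) by (unfold Q2 in *; lra).
  replace (N1 / Q1 - N2 / Q2) with ((N1 - N2) / Q1 + (N2 * (Q2 - Q1)) / (Q1 * Q2)) by (field; lra).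
  eapply Rle_trans. apply Rabs_triang.
  assert (Rabs ((N1 - N2) / Q1) <= (1 + 2 * B) * D / rho) by (apply abs_div_le; auto).
  assert (Rabs ((N2 * (Q2 - Q1)) / (Q1 * Q2)) <= (2 * B * (2 * B * D)) / rho^2).
  { apply abs_div_le. nra. simpl. rewrite Rmult_1_r. apply Rmult_le_compat; unfold Q1, Q2; lra.
    apply abs_prod_le; auto. }
  replace (((1 + 2 * B) / rho + 4 * B ^ 2 / rho ^ 2) * D) with ((1 + 2 * B) * D / rho + (2 * B * (2 * B * D)) / rho^2) by (field; lra).
  lra.
Qed.

Lemma Fp_lip alpha c B x1 z1 p1 x2 z2 p2 : 0 <= alpha -> 0 < c ->
  c <= x1 -> c <= x2 -> Rabs x1 <= B -> Rabs z1 <= B -> Rabs x2 <= B -> Rabs z2 <= B ->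
  Rabs (Fp alpha x1 z1 p1 - Fp alpha x2 z2 p2) <= (alpha * LG (c^2) B + 1/c + 1/c^2) * Dst x1 z1 p1 x2 z2 p2.
Proof.
  intros Ha Hc H1 H2 Hx1 Hz1 Hx2 Hz2. rewrite !Fp_G.
  assert (HG := Gf_lip (c^2) B x1 z1 p1 x2 z2 p2 ltac:(nra) ltac:(nra) ltac:(nra) Hx1 Hz1 Hx2 Hz2).
  set (D := Dst x1 z1 p1 x2 z2 p2) in *.
  assert (HD : 0 <= D) by (unfold D, Dst; pose proof (Rabs_pos (x1-x2)); pose proof (Rabs_pos (z1-z2)); pose proof (Rabs_pos (p1-p2)); lra).
  replace (alpha * Gf x1 z1 p1 - sin p1 / x1 - (alpha * Gf x2 z2 p2 - sin p2 / x2)) with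
    (alpha * (Gf x1 z1 p1 - Gf x2 z2 p2) + (- ((sin p1 - sin p2) / x1) + - (sin p2 * (x2 - x1) / (x1 * x2)))) by (field; lra).
  eapply Rle_trans. apply Rabs_triang. eapply Rle_trans. apply Rplus_le_compat_l. apply Rabs_triang.
  rewrite !Rabs_Ropp, Rabs_mult, (Rabs_right alpha) by lra.
  assert (Rabs ((sin p1 - sin p2) / x1) <= D / c).
  { apply abs_div_le; auto. eapply Rle_trans. apply sin_lip. unfold D, Dst.
    pose proof (Rabs_pos (x1-x2)); pose proof (Rabs_pos (z1-z2)); lra. }
  assert (Rabs (sin p2 * (x2 - x1) / (x1 * x2)) <= D / c^2).
  { apply abs_div_le. nra. simpl; nra.
    rewrite <- (Rmult_1_l D). apply abs_prod_le. pose proof (SIN_bound p2); apply Rabs_le; lra.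
    unfold D, Dst. rewrite <- Rabs_Ropp, Ropp_minus_distr.
    pose proof (Rabs_pos (p1-p2)); pose proof (Rabs_pos (z1-z2)); lra. }
  assert (alpha * Rabs (Gf x1 z1 p1 - Gf x2 z2 p2) <= alpha * (LG (c^2) B * D)) by (apply Rmult_le_compat_l; auto).
  replace ((alpha * LG (c ^ 2) B + 1 / c + 1 / c ^ 2) * D) with (alpha * (LG (c^2) B * D) + D / c + D / c^2) by (field; lra).
  lra.
Qed.

Lemma Fp_bound alpha c B x z p : 0 <= alpha -> 0 < c -> c <= x -> Rabs x <= B -> Rabs z <= B ->
  Rabs (Fp alpha x z p) <= alpha * (2 * B / c^2) + 1 / c.
Proof.
  intros Ha Hc Hx Hxb Hz. rewrite Fp_G. unfold Rminus. eapply Rle_trans. apply Rabs_triang.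
  rewrite Rabs_Ropp, Rabs_mult, (Rabs_right alpha) by lra.
  apply Rplus_le_compat. apply Rmult_le_compat_l; auto. apply Gf_bound; auto; nra.
  apply abs_div_le; auto. pose proof (SIN_bound p); apply Rabs_le; lra.
Qed.

Lemma is_derive_sub f g u a b : is_derive f u a -> is_derive g u b -> is_derive (fun t => f t - g t) u (a - b).
Proof. intros. apply (is_derive_minus f g u a b); auto. Qed.

Lemma Dst_cont (x1 z1 p1 x2 z2 p2 : R -> R) u :
  continuity_pt x1 u -> continuity_pt z1 u -> continuity_pt p1 u ->
  continuity_pt x2 u -> continuity_pt z2 u -> continuity_pt p2 u ->
  continuity_pt (fun v => Dst (x1 v) (z1 v) (p1 v) (x2 v) (z2 v) (p2 v)) u.
Proof.
  intros. unfold Dst.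
  assert (Ha : forall f g, continuity_pt f u -> continuity_pt g u -> continuity_pt (fun v => Rabs (f v - g v)) u).
  { intros f g Hf Hg. apply (continuity_pt_comp (fun v => f v - g v) Rabs).
    apply continuity_pt_minus; auto. apply Rcontinuity_abs. }
  apply continuity_pt_plus; [apply continuity_pt_plus|]; apply Ha; auto.
Qed.

Lemma Dst_nonneg a b c d e f : 0 <= Dst a b c d e f.
Proof. unfold Dst. pose proof (Rabs_pos (a-d)); pose proof (Rabs_pos (b-e)); pose proof (Rabs_pos (c-f)); lra. Qed.

Lemma Dst_zero a b c d e f : Dst a b c d e f <= 0 -> a = d /\ b = e /\ c = f.
Proof.
  unfold Dst. intros H. pose proof (Rabs_pos (a-d)); pose proof (Rabs_pos (b-e)); pose proof (Rabs_pos (c-f)).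
  assert (Rabs (a - d) = 0) by lra. assert (Rabs (b - e) = 0) by lra. assert (Rabs (c - f) = 0) by lra.
  apply Rabs_eq_0 in H3; apply Rabs_eq_0 in H4; apply Rabs_eq_0 in H5. lra.
Qed.

Definition LF alpha c B := alpha * LG (c^2) B + 1/c + 1/c^2.

Lemma LG_nonneg rho B : 0 < rho -> 0 <= B -> 0 <= LG rho B.
Proof.
  intros. unfold LG. apply Rplus_le_le_0_compat; apply Rmult_le_pos; try nra.
  left; apply Rinv_0_lt_compat; auto. left; apply Rinv_0_lt_compat; nra.
Qed.

Lemma LF_nonneg alpha c B : 0 <= alpha -> 0 < c -> 0 <= B -> 0 <= LF alpha c B.
Proof.
  intros. unfold LF. assert (0 <= LG (c^2) B) by (apply LG_nonneg; nra).
  assert (0 < 1/c) by (apply Rdiv_lt_0_compat; lra).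
  assert (0 < 1/c^2) by (apply Rdiv_lt_0_compat; nra). nra.
Qed.

Lemma reg_unique alpha c B s0 s1 (x1 z1 p1 x2 z2 p2 : R -> R) :
  0 <= alpha -> 0 < c -> s0 <= s1 ->
  (forall u, s0 <= u <= s1 -> is_derive x1 u (cos (p1 u)) /\ is_derive z1 u (sin (p1 u)) /\
      is_derive p1 u (Fp alpha (x1 u) (z1 u) (p1 u))) ->
  (forall u, s0 <= u <= s1 -> is_derive x2 u (cos (p2 u)) /\ is_derive z2 u (sin (p2 u)) /\
      is_derive p2 u (Fp alpha (x2 u) (z2 u) (p2 u))) ->
  (forall u, s0 <= u <= s1 -> c <= x1 u /\ c <= x2 u /\ Rabs (x1 u) <= B /\ Rabs (z1 u) <= B /\
      Rabs (x2 u) <= B /\ Rabs (z2 u) <= B) ->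
  x1 s0 = x2 s0 -> z1 s0 = z2 s0 -> p1 s0 = p2 s0 ->
  (s1 - s0) * (2 + LF alpha c B) < 1 ->
  forall u, s0 <= u <= s1 -> x1 u = x2 u /\ z1 u = z2 u /\ p1 u = p2 u.
Proof.
  intros Hal Hc Hs H1 H2 HB E1 E2 E3 Hsmall.
  set (D := fun v => Dst (x1 v) (z1 v) (p1 v) (x2 v) (z2 v) (p2 v)).
  assert (HBp : 0 <= B) by (destruct (HB s0 ltac:(lra)) as [_ [_ [Hb _]]]; pose proof (Rabs_pos (x1 s0)); lra).
  pose proof (LF_nonneg alpha c B Hal Hc HBp) as HLF.
  destruct (continuity_ab_maj D s0 s1 Hs) as [m [Hmax Hm]].
  { intros u Hu. destruct (H1 u Hu) as [A1 [A2 A3]]. destruct (H2 u Hu) as [B1 [B2 B3]].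
    apply Dst_cont; eapply derive_cont; eauto. }
  set (Dm := D m).
  assert (HDm0 : 0 <= Dm) by apply Dst_nonneg.
  assert (Hx : Rabs ((x1 m - x2 m) - (x1 s0 - x2 s0)) <= Dm * (m - s0)).
  { apply (mvt_bound (fun v => x1 v - x2 v) (fun v => cos (p1 v) - cos (p2 v))). lra.
    intros u Hu. apply is_derive_sub; [apply (H1 u)|apply (H2 u)]; lra.
    intros u Hu. eapply Rle_trans. apply cos_lip. eapply Rle_trans; [|apply (Hmax u); lra].
    unfold D, Dst. pose proof (Rabs_pos (x1 u - x2 u)); pose proof (Rabs_pos (z1 u - z2 u)); lra. }
  assert (Hz : Rabs ((z1 m - z2 m) - (z1 s0 - z2 s0)) <= Dm * (m - s0)).
  { apply (mvt_bound (fun v => z1 v - z2 v) (fun v => sin (p1 v) - sin (p2 v))). lra.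
    intros u Hu. apply is_derive_sub; [apply (H1 u)|apply (H2 u)]; lra.
    intros u Hu. eapply Rle_trans. apply sin_lip. eapply Rle_trans; [|apply (Hmax u); lra].
    unfold D, Dst. pose proof (Rabs_pos (x1 u - x2 u)); pose proof (Rabs_pos (z1 u - z2 u)); lra. }
  assert (Hp : Rabs ((p1 m - p2 m) - (p1 s0 - p2 s0)) <= (LF alpha c B * Dm) * (m - s0)).
  { apply (mvt_bound (fun v => p1 v - p2 v) (fun v => Fp alpha (x1 v) (z1 v) (p1 v) - Fp alpha (x2 v) (z2 v) (p2 v))). lra.
    intros u Hu. apply is_derive_sub; [apply (H1 u)|apply (H2 u)]; lra.
    intros u Hu. destruct (HB u ltac:(lra)) as [B1 [B2 [B3 [B4 [B5 B6]]]]].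
    eapply Rle_trans. apply (Fp_lip alpha c B); auto.
    apply Rmult_le_compat_l; auto. apply (Hmax u); lra. }
  rewrite E1, E2, E3, Rminus_diag, Rminus_0_r in *.
  assert (Dm <= Dm * (m - s0) * (2 + LF alpha c B)).
  { assert (HDe : Dm = Rabs (x1 m - x2 m) + Rabs (z1 m - z2 m) + Rabs (p1 m - p2 m)) by reflexivity.
    rewrite HDe at 1. lra. }
  assert (Dm <= 0).
  { assert (Dm * (m - s0) * (2 + LF alpha c B) <= Dm * ((s1 - s0) * (2 + LF alpha c B))).
    { replace (Dm * (m - s0) * (2 + LF alpha c B)) with (Dm * ((m - s0) * (2 + LF alpha c B))) by ring.
      apply Rmult_le_compat_l; auto. apply Rmult_le_compat_r; lra. }
    nra. }
  intros u Hu. apply Dst_zero. specialize (Hmax u Hu). assert (Hu0 : D u <= 0) by (unfold Dm in *; lra). exact Hu0.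
Qed.

Lemma pos_below (b : Rbar) : Rbar_lt 0 b -> exists r, 0 < r /\ forall s, s <= r -> Rbar_lt s b.
Proof.
  destruct b as [r| |]; simpl; intros H.
  - exists (r/2). split. lra. intros; lra.
  - exists 1. split. lra. auto.
  - contradiction.
Qed.

Lemma cos_half v : Rabs v <= 1/2 -> 1/2 <= cos v.
Proof.
  intros H. pose proof PI2_1.
  assert (cos v = cos (Rabs v)).
  { destruct (Rle_or_lt 0 v). rewrite Rabs_right; lra. rewrite Rabs_left, cos_neg; lra. }
  rewrite H1, <- cos_PI3. apply cos_decr_1; try lra. apply Rabs_pos.
Qed.

Lemma sin_diff_lower u v : Rabs u <= 1/2 -> Rabs v <= 1/2 -> Rabs (u - v) <= 2 * Rabs (sin u - sin v).
Proof.
  intros Hu Hv.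
  assert (Hg : forall a b, Rabs a <= 1/2 -> Rabs b <= 1/2 -> a <= b -> Rabs (b - a) <= 2 * Rabs (sin b - sin a)).
  { intros a b Ha Hb Hab. destruct (mvt sin cos a b Hab) as [c [Hc Heq]].
    { intros w _. auto_derive; auto; ring. }
    assert (Rabs c <= 1/2) by (apply Rabs_le; apply Rabs_le_between in Ha; apply Rabs_le_between in Hb; lra).
    pose proof (cos_half c H). rewrite Heq, Rabs_mult, Rabs_right by lra.
    rewrite Rabs_right by lra. nra. }
  destruct (Rle_or_lt v u).
  - apply Hg; auto.
  - rewrite <- Rabs_Ropp, Ropp_minus_distr, <- (Rabs_Ropp (sin u - sin v)), Ropp_minus_distr.
    apply Hg; auto; lra.
Qed.

Lemma near0_bounds alpha a b x z p h : is_solution alpha a b x z p ->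
  (forall s, 0 <= s <= h -> in_oint a b s) -> (forall u, 0 <= u <= h -> Rabs (p u) <= 1/2) ->
  forall u, 0 <= u <= h -> u/2 <= x u /\ Rabs (x u) <= u /\ Rabs (z u - 1) <= u.
Proof.
  intros H Hin Hp u Hu. destruct (sol_basic _ _ _ _ _ _ H) as [_ [_ [Hx0 [Hz0 _]]]].
  split; [|split].
  - destruct (mvt x (fun v => cos (p v)) 0 u) as [c [Hc Heq]]. lra.
    { intros v Hv. apply (sol_dx _ _ _ _ _ _ _ H). apply Hin; lra. }
    pose proof (cos_half _ (Hp c ltac:(lra))). rewrite Hx0 in Heq. nra.
  - replace (x u) with (x u - x 0) by (rewrite Hx0; ring). replace u with (1 * (u - 0)) at 2 by ring.
    apply (mvt_bound x (fun v => cos (p v))). lra.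
    intros v Hv. apply (sol_dx _ _ _ _ _ _ _ H). apply Hin; lra.
    intros v _. pose proof (COS_bound (p v)); apply Rabs_le; lra.
  - rewrite <- Hz0. replace u with (1 * (u - 0)) at 2 by ring.
    apply (mvt_bound z (fun v => sin (p v))). lra.
    intros v Hv. apply (sol_dz _ _ _ _ _ _ _ H). apply Hin; lra.
    intros v _. pose proof (SIN_bound (p v)); apply Rabs_le; lra.
Qed.

Lemma w_deriv alpha a b x z p u : is_solution alpha a b x z p -> in_oint a b u -> 0 <= u ->
  (0 < u -> 0 < x u) ->
  is_derive (fun v => x v * sin (p v)) u (alpha * x u * cos (p u) * Gf (x u) (z u) (p u)).
Proof.
  intros H Hin Hu Hxp. destruct (sol_basic _ _ _ _ _ _ H) as [_ [_ [Hx0 [Hz0 Hp0]]]].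
  destruct (sol_edp _ _ _ _ _ _ _ H Hin) as [dp Hdp].
  assert (Hs : is_derive (fun v => sin (p v)) u (dp * cos (p u))).
  { apply (is_derive_comp sin p u (cos (p u)) dp); auto. auto_derive; auto; ring. }
  pose proof (is_derive_mult x (fun v => sin (p v)) u _ _ (sol_dx _ _ _ _ _ _ _ H Hin) Hs) as Hm.
  specialize (Hm ltac:(intros; apply Rmult_comm)).
  replace (alpha * x u * cos (p u) * Gf (x u) (z u) (p u)) with
    (plus (mult (cos (p u)) (sin (p u))) (mult (x u) (dp * cos (p u)))); [exact Hm|].
  unfold plus, mult; simpl.
  destruct (Req_dec u 0) as [->|Hne].
  - rewrite Hx0, Hp0, sin_0. ring.
  - assert (Hxu : 0 < x u) by (apply Hxp; lra).
    pose proof (sol_dp _ _ _ _ _ _ _ H Hin Hne) as Hd.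
    assert (dp = Fp alpha (x u) (z u) (p u)) by (eapply is_derive_unique in Hdp; eapply is_derive_unique in Hd; congruence).
    subst dp. rewrite Fp_G. field. lra.
Qed.

Lemma abs3_prod a b c A B C : Rabs a <= A -> Rabs b <= B -> Rabs c <= C -> Rabs (a * b * c) <= A * B * C.
Proof. intros. apply abs_prod_le; auto. apply abs_prod_le; auto. Qed.

Lemma sing_unique alpha a1 b1 x1 z1 p1 a2 b2 x2 z2 p2 : 0 <= alpha ->
  is_solution alpha a1 b1 x1 z1 p1 -> is_solution alpha a2 b2 x2 z2 p2 ->
  exists h, 0 < h /\ (forall s, 0 <= s <= h -> in_oint a1 b1 s /\ in_oint a2 b2 s) /\
    forall u, 0 <= u <= h -> x1 u = x2 u /\ z1 u = z2 u /\ p1 u = p2 u.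
Proof.
  intros Hal S1 S2.
  destruct (sol_basic _ _ _ _ _ _ S1) as [Ha1 [Hb1 [Hx10 [Hz10 Hp10]]]].
  destruct (sol_basic _ _ _ _ _ _ S2) as [Ha2 [Hb2 [Hx20 [Hz20 Hp20]]]].
  destruct (pos_below b1 Hb1) as [r1 [Hr1 Hr1']].
  destruct (pos_below b2 Hb2) as [r2 [Hr2 Hr2']].
  destruct (cont_eps p1 0 (psi_cont _ _ _ _ _ _ _ S1 (in_oint_0 _ _ Ha1 Hb1)) (1/2) ltac:(lra)) as [d1 [Hd1 Hd1']].
  destruct (cont_eps p2 0 (psi_cont _ _ _ _ _ _ _ S2 (in_oint_0 _ _ Ha2 Hb2)) (1/2) ltac:(lra)) as [d2 [Hd2 Hd2']].
  set (C := 2 + 832 * alpha).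
  assert (HC : 2 <= C) by (unfold C; lra).
  assert (HC' : 0 < 1/(2*C)) by (apply Rdiv_lt_0_compat; lra).
  set (h := Rmin (Rmin (Rmin r1 r2) (Rmin (d1/2) (d2/2))) (Rmin (1/2) (1/(2*C)))).
  assert (Hh0 : 0 < h).
  { unfold h. repeat apply Rmin_glb_lt; lra. }
  assert (Hh1 : h <= Rmin (Rmin r1 r2) (Rmin (d1/2) (d2/2))) by apply Rmin_l.
  assert (Hh2 : h <= Rmin (1/2) (1/(2*C))) by apply Rmin_r.
  pose proof (Rmin_l r1 r2). pose proof (Rmin_r r1 r2). pose proof (Rmin_l (d1/2) (d2/2)). pose proof (Rmin_r (d1/2) (d2/2)).
  pose proof (Rmin_l (Rmin r1 r2) (Rmin (d1/2) (d2/2))). pose proof (Rmin_r (Rmin r1 r2) (Rmin (d1/2) (d2/2))).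
  pose proof (Rmin_l (1/2) (1/(2*C))). pose proof (Rmin_r (1/2) (1/(2*C))).
  assert (Hhr1 : h <= r1) by lra. assert (Hhr2 : h <= r2) by lra.
  assert (Hhd1 : h <= d1/2) by lra. assert (Hhd2 : h <= d2/2) by lra.
  assert (Hhh : h <= 1/2) by lra. assert (HhC : h <= 1/(2*C)) by lra.
  clear H H0 H1 H2 H3 H4 H5 H6 Hh1 Hh2.
  assert (Hin : forall s, 0 <= s <= h -> in_oint a1 b1 s /\ in_oint a2 b2 s).
  { intros s Hs. split; split.
    - destruct a1; simpl in *; auto; lra.
    - apply Hr1'; lra.
    - destruct a2; simpl in *; auto; lra.
    - apply Hr2'; lra. }
  exists h. split; auto. split; auto.
  assert (Hp1 : forall u, 0 <= u <= h -> Rabs (p1 u) <= 1/2).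
  { intros u Hu. assert (Rabs (u - 0) < d1) by (rewrite Rminus_0_r, Rabs_right; lra).
    specialize (Hd1' u H). rewrite Hp10, Rminus_0_r in Hd1'. lra. }
  assert (Hp2 : forall u, 0 <= u <= h -> Rabs (p2 u) <= 1/2).
  { intros u Hu. assert (Rabs (u - 0) < d2) by (rewrite Rminus_0_r, Rabs_right; lra).
    specialize (Hd2' u H). rewrite Hp20, Rminus_0_r in Hd2'. lra. }
  assert (N1 := near0_bounds _ _ _ _ _ _ h S1 (fun s Hs => proj1 (Hin s Hs)) Hp1).
  assert (N2 := near0_bounds _ _ _ _ _ _ h S2 (fun s Hs => proj2 (Hin s Hs)) Hp2).
  set (D := fun v => Dst (x1 v) (z1 v) (p1 v) (x2 v) (z2 v) (p2 v)).
  destruct (continuity_ab_maj D 0 h ltac:(lra)) as [m [Hmax Hm]].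
  { intros u Hu. destruct (Hin u Hu) as [I1 I2].
    apply Dst_cont.
    eapply derive_cont; apply (sol_dx _ _ _ _ _ _ _ S1 I1).
    eapply derive_cont; apply (sol_dz _ _ _ _ _ _ _ S1 I1).
    apply (psi_cont _ _ _ _ _ _ _ S1 I1).
    eapply derive_cont; apply (sol_dx _ _ _ _ _ _ _ S2 I2).
    eapply derive_cont; apply (sol_dz _ _ _ _ _ _ _ S2 I2).
    apply (psi_cont _ _ _ _ _ _ _ S2 I2). }
  assert (HDm : D m <= 0).
  { destruct (Req_dec m 0) as [Hm0|Hm0].
    - subst m. unfold D, Dst. rewrite Hx10, Hx20, Hz10, Hz20, Hp10, Hp20, !Rminus_diag, !Rabs_R0. lra.
    - set (Dm := D m).
      assert (HDm0 : 0 <= Dm) by apply Dst_nonneg.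
      assert (Hmp : 0 < m) by lra.
      assert (HDv : forall v, 0 <= v <= m -> D v <= Dm) by (intros; apply Hmax; lra).
      assert (Hdp : forall v, 0 <= v <= m -> Rabs (p1 v - p2 v) <= Dm).
      { intros v Hv. eapply Rle_trans; [|apply (HDv v); auto]. unfold D, Dst; cbv beta.
        pose proof (Rabs_pos (x1 v - x2 v)); pose proof (Rabs_pos (z1 v - z2 v)); lra. }
      assert (HDx : forall v, 0 <= v <= m -> Rabs (x1 v - x2 v) <= Dm * v).
      { intros v Hv.
        assert (Hb := mvt_bound (fun v => x1 v - x2 v) (fun v => cos (p1 v) - cos (p2 v)) 0 v Dm ltac:(lra)). cbv beta in Hb.
        rewrite Hx10, Hx20, Rminus_0_r, Rminus_0_r, Rminus_0_r in Hb. apply Hb.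
        intros u Hu. apply is_derive_sub; [apply (sol_dx _ _ _ _ _ _ _ S1)|apply (sol_dx _ _ _ _ _ _ _ S2)]; apply Hin; lra.
        intros u Hu. eapply Rle_trans. apply cos_lip. apply Hdp; lra. }
      assert (HDz : Rabs (z1 m - z2 m) <= Dm * m).
      { assert (Hb := mvt_bound (fun v => z1 v - z2 v) (fun v => sin (p1 v) - sin (p2 v)) 0 m Dm ltac:(lra)). cbv beta in Hb.
        rewrite Hz10, Hz20, Rminus_diag, Rminus_0_r, Rminus_0_r in Hb. apply Hb.
        intros u Hu. apply is_derive_sub; [apply (sol_dz _ _ _ _ _ _ _ S1)|apply (sol_dz _ _ _ _ _ _ _ S2)]; apply Hin; lra.
        intros u Hu. eapply Rle_trans. apply sin_lip. apply Hdp; lra. }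
      set (W1 := fun v => alpha * x1 v * cos (p1 v) * Gf (x1 v) (z1 v) (p1 v)).
      set (W2 := fun v => alpha * x2 v * cos (p2 v) * Gf (x2 v) (z2 v) (p2 v)).
      assert (HG : forall v, 0 <= v <= m ->
        Rabs (Gf (x1 v) (z1 v) (p1 v)) <= 12 /\ Rabs (Gf (x2 v) (z2 v) (p2 v)) <= 12 /\
        Rabs (Gf (x1 v) (z1 v) (p1 v) - Gf (x2 v) (z2 v) (p2 v)) <= 160 * Dm).
      { intros v Hv. destruct (N1 v ltac:(lra)) as [A1 [A2 A3]]. destruct (N2 v ltac:(lra)) as [B1 [B2 B3]].
        apply Rabs_le_between in A3. apply Rabs_le_between in B3.
        assert (Q1 : 1/4 <= x1 v ^ 2 + z1 v ^ 2) by nra.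
        assert (Q2 : 1/4 <= x2 v ^ 2 + z2 v ^ 2) by nra.
        assert (X1 : Rabs (x1 v) <= 3/2) by lra. assert (X2 : Rabs (x2 v) <= 3/2) by lra.
        assert (Z1 : Rabs (z1 v) <= 3/2) by (apply Rabs_le; lra).
        assert (Z2 : Rabs (z2 v) <= 3/2) by (apply Rabs_le; lra).
        split; [|split].
        - replace 12 with (2 * (3/2) / (1/4)) by field. apply Gf_bound; auto; lra.
        - replace 12 with (2 * (3/2) / (1/4)) by field. apply Gf_bound; auto; lra.
        - eapply Rle_trans. apply (Gf_lip (1/4) (3/2)); auto; lra.
          replace (LG (1/4) (3/2)) with 160 by (unfold LG; field).
          apply Rmult_le_compat_l. lra. apply HDv; auto. }
      assert (HW : forall v, 0 <= v <= m -> Rabs (W1 v - W2 v) <= 184 * alpha * m * Dm).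
      { intros v Hv. destruct (HG v Hv) as [G1 [G2 G3]].
        destruct (N2 v ltac:(lra)) as [_ [Bx _]].
        unfold W1, W2.
        replace (alpha * x1 v * cos (p1 v) * Gf (x1 v) (z1 v) (p1 v) - alpha * x2 v * cos (p2 v) * Gf (x2 v) (z2 v) (p2 v))
          with (alpha * ((x1 v - x2 v) * cos (p1 v) * Gf (x1 v) (z1 v) (p1 v) +
                 x2 v * (cos (p1 v) - cos (p2 v)) * Gf (x1 v) (z1 v) (p1 v) +
                 x2 v * cos (p2 v) * (Gf (x1 v) (z1 v) (p1 v) - Gf (x2 v) (z2 v) (p2 v)))) by ring.
        rewrite Rabs_mult, (Rabs_right alpha) by lra.
        replace (184 * alpha * m * Dm) with (alpha * (184 * m * Dm)) by ring.
        apply Rmult_le_compat_l; auto.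
        assert (Hc1 : Rabs (cos (p1 v)) <= 1) by (pose proof (COS_bound (p1 v)); apply Rabs_le; lra).
        assert (Hc2 : Rabs (cos (p2 v)) <= 1) by (pose proof (COS_bound (p2 v)); apply Rabs_le; lra).
        assert (Hcc : Rabs (cos (p1 v) - cos (p2 v)) <= Dm) by (eapply Rle_trans; [apply cos_lip|apply Hdp; auto]).
        pose proof (abs3_prod _ _ _ _ _ _ (HDx v Hv) Hc1 G1).
        pose proof (abs3_prod _ _ _ _ _ _ Bx Hcc G1).
        pose proof (abs3_prod _ _ _ _ _ _ Bx Hc2 G3).
        eapply Rle_trans. apply Rabs_triang. eapply Rle_trans. apply Rplus_le_compat_r. apply Rabs_triang.
        assert (Dm * v <= Dm * m) by (apply Rmult_le_compat_l; lra).
        assert (v * Dm <= m * Dm) by (apply Rmult_le_compat_r; lra).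
        nra. }
      assert (HdW : forall i, (i = 1 \/ i = 2) -> forall v, 0 <= v <= m ->
         is_derive (fun u => (if Req_EM_T i 1 then x1 u * sin (p1 u) else x2 u * sin (p2 u))) v
           (if Req_EM_T i 1 then W1 v else W2 v)).
      { intros i Hi v Hv. destruct (Req_EM_T i 1).
        - apply (w_deriv _ _ _ _ _ _ _ S1). apply Hin; lra. lra. intros. destruct (N1 v ltac:(lra)). lra.
        - apply (w_deriv _ _ _ _ _ _ _ S2). apply Hin; lra. lra. intros. destruct (N2 v ltac:(lra)). lra. }
      assert (Hw : Rabs (x1 m * sin (p1 m) - x2 m * sin (p2 m)) <= (184 * alpha * m * Dm) * m).
      { assert (Hb := mvt_bound (fun v => x1 v * sin (p1 v) - x2 v * sin (p2 v)) (fun v => W1 v - W2 v) 0 m (184 * alpha * m * Dm) ltac:(lra)). cbv beta in Hb.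
        rewrite Hx10, Hx20, !Rmult_0_l, Rminus_diag, !Rminus_0_r in Hb. apply Hb.
        intros u Hu. apply is_derive_sub.
        + pose proof (HdW 1 (or_introl eq_refl) u ltac:(lra)). destruct (Req_EM_T 1 1); [auto|congruence].
        + pose proof (HdW 2 (or_intror eq_refl) u ltac:(lra)). destruct (Req_EM_T 2 1); [lra|auto].
        + intros u Hu. apply HW; lra. }
      assert (Hw2 : Rabs (x2 m * sin (p2 m)) <= (12 * alpha * m) * m).
      { assert (Hb := mvt_bound (fun v => x2 v * sin (p2 v)) W2 0 m (12 * alpha * m) ltac:(lra)). cbv beta in Hb.
        rewrite Hx20, !Rmult_0_l, !Rminus_0_r in Hb. apply Hb.
        + intros u Hu. pose proof (HdW 2 (or_intror eq_refl) u ltac:(lra)). destruct (Req_EM_T 2 1); [lra|auto].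
        + intros u Hu. destruct (HG u ltac:(lra)) as [_ [G2 _]]. destruct (N2 u ltac:(lra)) as [_ [Bx _]].
          unfold W2. assert (Hc2 : Rabs (cos (p2 u)) <= 1) by (pose proof (COS_bound (p2 u)); apply Rabs_le; lra).
          assert (Hx : Rabs (alpha * x2 u) <= alpha * m) by (rewrite Rabs_mult, (Rabs_right alpha) by lra; apply Rmult_le_compat_l; lra).
          pose proof (abs3_prod _ _ _ _ _ _ Hx Hc2 G2). lra. }
      destruct (N1 m ltac:(lra)) as [X1 _]. destruct (N2 m ltac:(lra)) as [X2 _].
      assert (Hsin : Rabs (sin (p1 m) - sin (p2 m)) <= 416 * alpha * m * Dm).
      { replace (sin (p1 m) - sin (p2 m)) with
          ((x1 m * sin (p1 m) - x2 m * sin (p2 m)) / x1 m + (x2 m * sin (p2 m)) * (x2 m - x1 m) / (x1 m * x2 m))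
          by (field; lra).
        eapply Rle_trans. apply Rabs_triang.
        assert (T1 : Rabs ((x1 m * sin (p1 m) - x2 m * sin (p2 m)) / x1 m) <= (184 * alpha * m * Dm) * m / (m/2))
          by (apply abs_div_le; auto; lra).
        assert (T2 : Rabs ((x2 m * sin (p2 m)) * (x2 m - x1 m) / (x1 m * x2 m)) <= ((12 * alpha * m) * m) * (Dm * m) / (m * m / 4)).
        { apply abs_div_le. nra. nra. apply abs_prod_le; auto.
          rewrite <- Rabs_Ropp, Ropp_minus_distr. apply HDx; lra. }
        replace (184 * alpha * m * Dm * m / (m / 2)) with (368 * alpha * m * Dm) in T1 by (field; lra).
        replace (12 * alpha * m * m * (Dm * m) / (m * m / 4)) with (48 * alpha * m * Dm) in T2 by (field; lra).
        lra. }
      assert (Hpm : Rabs (p1 m - p2 m) <= 832 * alpha * m * Dm).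
      { eapply Rle_trans. apply sin_diff_lower; [apply Hp1|apply Hp2]; lra. lra. }
      assert (HDe : Dm = Rabs (x1 m - x2 m) + Rabs (z1 m - z2 m) + Rabs (p1 m - p2 m)) by reflexivity.
      pose proof (HDx m ltac:(lra)).
      assert (Dm <= C * m * Dm) by (unfold C; lra).
      assert (C * m <= 1/2).
      { assert (C * m <= C * (1/(2*C))) by (apply Rmult_le_compat_l; lra).
        replace (C * (1/(2*C))) with (1/2) in H1 by (field; lra). lra. }
      nra. }
  intros u Hu. apply Dst_zero. specialize (Hmax u Hu). assert (Hu0 : D u <= 0) by lra. exact Hu0.
Qed.

Lemma xz_growth alpha a b x z p u : is_solution alpha a b x z p -> 0 <= u -> in_oint a b u ->
  Rabs (x u) <= u /\ Rabs (z u) <= 1 + u.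
Proof.
  intros H Hu Hi. destruct (sol_basic _ _ _ _ _ _ H) as [Ha [Hb [Hx0 [Hz0 _]]]].
  assert (HI : forall v, 0 <= v <= u -> in_oint a b v) by (intros v Hv; apply (in_oint_between a b 0 u); auto; apply in_oint_0; auto).
  split.
  - assert (Hb' := mvt_bound x (fun v => cos (p v)) 0 u 1 Hu). rewrite Hx0, Rminus_0_r, Rminus_0_r, Rmult_1_l in Hb'.
    apply Hb'. intros v Hv. apply (sol_dx _ _ _ _ _ _ _ H); auto.
    intros v _. pose proof (COS_bound (p v)); apply Rabs_le; lra.
  - assert (Hb' := mvt_bound z (fun v => sin (p v)) 0 u 1 Hu). rewrite Hz0, Rminus_0_r, Rmult_1_l in Hb'.
    assert (Rabs (z u - 1) <= u). { apply Hb'. intros v Hv. apply (sol_dz _ _ _ _ _ _ _ H); auto.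
    intros v _. pose proof (SIN_bound (p v)); apply Rabs_le; lra. }
    apply Rabs_le_between in H0. apply Rabs_le; lra.
Qed.

Lemma fwd_unique alpha a1 b1 x1 z1 p1 a2 b2 x2 z2 p2 : 0 < alpha ->
  is_solution alpha a1 b1 x1 z1 p1 -> is_solution alpha a2 b2 x2 z2 p2 ->
  forall s, 0 <= s -> in_oint a1 b1 s -> in_oint a2 b2 s -> x1 s = x2 s /\ z1 s = z2 s /\ p1 s = p2 s.
Proof.
  intros Hal S1 S2 s Hs Hi1 Hi2.
  destruct (sol_basic _ _ _ _ _ _ S1) as [Ha1 [Hb1 _]].
  destruct (sol_basic _ _ _ _ _ _ S2) as [Ha2 [Hb2 _]].
  destruct (sing_unique alpha a1 b1 x1 z1 p1 a2 b2 x2 z2 p2 ltac:(lra) S1 S2) as [h0 [Hh0 [Hin0 Hag0]]].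
  destruct (Rle_or_lt s h0) as [Hsh|Hsh]. apply Hag0; lra.
  assert (HI : forall v, 0 <= v <= s -> in_oint a1 b1 v /\ in_oint a2 b2 v).
  { intros v Hv. split; [apply (in_oint_between a1 b1 0 s)|apply (in_oint_between a2 b2 0 s)]; auto; apply in_oint_0; auto. }
  set (c := x1 h0).
  assert (Hc : 0 < c) by (apply (x_sign _ _ _ _ _ _ Hal S1 h0); [apply HI; lra|lra]).
  assert (Hc2 : x2 h0 = c) by (unfold c; symmetry; apply Hag0; lra).
  set (B := 1 + s).
  assert (HB : forall u, h0 <= u <= s -> c <= x1 u /\ c <= x2 u /\ Rabs (x1 u) <= B /\ Rabs (z1 u) <= B /\
      Rabs (x2 u) <= B /\ Rabs (z2 u) <= B).
  { intros u Hu. destruct (HI u ltac:(lra)) as [I1 I2]. destruct (HI h0 ltac:(lra)) as [J1 J2].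
    destruct (xz_growth _ _ _ _ _ _ u S1 ltac:(lra) I1). destruct (xz_growth _ _ _ _ _ _ u S2 ltac:(lra) I2).
    split; [|split].
    - destruct (Req_dec u h0) as [->|]. unfold c; lra. left. apply (x_incr _ _ _ _ _ _ Hal S1); auto; lra.
    - destruct (Req_dec u h0) as [->|]. lra. rewrite <- Hc2. left. apply (x_incr _ _ _ _ _ _ Hal S2); auto; lra.
    - unfold B; repeat split; lra. }
  assert (HBp : 0 <= B) by (unfold B; lra).
  set (L := LF alpha c B).
  pose proof (LF_nonneg alpha c B ltac:(lra) Hc HBp) as HL. fold L in HL.
  set (del := 1 / (2 * (2 + L))).
  assert (Hdel : 0 < del) by (apply Rdiv_lt_0_compat; lra).
  assert (Hdel2 : del * (2 + L) = 1/2) by (unfold del; field; lra).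
  assert (Hstep : forall n, forall u, 0 <= u <= Rmin s (h0 + INR n * del) -> x1 u = x2 u /\ z1 u = z2 u /\ p1 u = p2 u).
  { induction n.
    - simpl. rewrite Rmult_0_l, Rplus_0_r, Rmin_right by lra. auto.
    - intros u Hu. set (t0 := Rmin s (h0 + INR n * del)) in *.
      destruct (Rle_or_lt u t0) as [Hut|Hut]. apply IHn; lra.
      assert (Ht0 : h0 <= t0 <= s).
      { unfold t0. split. apply Rmin_glb. lra. pose proof (pos_INR n). nra. apply Rmin_l. }
      set (t1 := Rmin s (h0 + INR (S n) * del)) in *.
      assert (Ht1 : t1 <= s) by apply Rmin_l.
      assert (Ht01 : t1 - t0 <= del).
      { unfold t1, t0. rewrite S_INR. destruct (Rle_or_lt s (h0 + INR n * del)).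
        rewrite (Rmin_left s (h0 + INR n * del)) by lra. pose proof (Rmin_l s (h0 + (INR n + 1) * del)). lra.
        rewrite (Rmin_right s (h0 + INR n * del)) by lra. pose proof (Rmin_r s (h0 + (INR n + 1) * del)). lra. }
      destruct (IHn t0 ltac:(lra)) as [E1 [E2 E3]].
      apply (reg_unique alpha c B t0 t1 x1 z1 p1 x2 z2 p2); auto; try lra.
      + intros v Hv. destruct (HI v ltac:(lra)) as [I1 _]. split; [|split].
        apply (sol_dx _ _ _ _ _ _ _ S1 I1). apply (sol_dz _ _ _ _ _ _ _ S1 I1). apply (sol_dp _ _ _ _ _ _ _ S1 I1). lra.
      + intros v Hv. destruct (HI v ltac:(lra)) as [_ I2]. split; [|split].
        apply (sol_dx _ _ _ _ _ _ _ S2 I2). apply (sol_dz _ _ _ _ _ _ _ S2 I2). apply (sol_dp _ _ _ _ _ _ _ S2 I2). lra.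
      + intros v Hv. apply HB. lra.
      + fold L. assert ((t1 - t0) * (2 + L) <= del * (2 + L)) by (apply Rmult_le_compat_r; lra). lra. }
  destruct (INR_unbounded ((s - h0) / del)) as [n Hn].
  apply (Hstep n). split. lra. apply Rmin_glb. lra.
  assert ((s - h0) / del * del = s - h0) by (field; lra).
  assert ((s - h0) / del * del <= INR n * del) by (apply Rmult_le_compat_r; lra). lra.
Qed.

Lemma full_unique alpha a1 b1 x1 z1 p1 a2 b2 x2 z2 p2 : 0 < alpha ->
  is_solution alpha a1 b1 x1 z1 p1 -> is_solution alpha a2 b2 x2 z2 p2 ->
  forall s, in_oint a1 b1 s -> in_oint a2 b2 s -> x1 s = x2 s /\ z1 s = z2 s /\ p1 s = p2 s.
Proof.
  intros Hal S1 S2 s Hi1 Hi2. destruct (Rle_or_lt 0 s).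
  - apply (fwd_unique alpha a1 b1 x1 z1 p1 a2 b2 x2 z2 p2); auto.
  - destruct (fwd_unique alpha _ _ _ _ _ _ _ _ _ _ Hal (reflect_sol _ _ _ _ _ _ S1) (reflect_sol _ _ _ _ _ _ S2) (-s))
      as [A1 [A2 A3]]; try lra.
    apply in_oint_opp; rewrite Ropp_involutive; auto.
    apply in_oint_opp; rewrite Ropp_involutive; auto.
    rewrite Ropp_involutive in A1, A2, A3. lra.
Qed.

Lemma lip_cont (g : R -> R) K : (forall t t', Rabs (g t - g t') <= K * Rabs (t - t')) ->
  forall t, continuous g t.
Proof.
  intros H t. apply continuity_pt_filterlim.
  intros eps Heps. assert (HK : 0 <= K).
  { specialize (H 1 0). pose proof (Rabs_pos (g 1 - g 0)). rewrite Rminus_0_r, Rabs_R1 in H. lra. }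
  exists (eps / (K + 1)). split. apply Rdiv_lt_0_compat; lra.
  intros y [_ Hy]. simpl in *. unfold R_dist in *.
  eapply Rle_lt_trans. apply H.
  apply Rle_lt_trans with ((K+1) * Rabs (y - t)). pose proof (Rabs_pos (y - t)). nra.
  replace eps with ((K+1) * (eps / (K+1))) by (field; lra).
  apply Rmult_lt_compat_l; lra.
Qed.

Lemma RInt_bound (g : R -> R) K a b : (forall u, continuous g u) ->
  (forall u, Rmin a b <= u <= Rmax a b -> Rabs (g u) <= K) -> Rabs (RInt g a b) <= K * Rabs (b - a).
Proof.
  intros Hc Hb. destruct (Rle_or_lt a b).
  - rewrite Rmin_left, Rmax_right in Hb by lra. rewrite (Rabs_right (b - a)) by lra. rewrite Rmult_comm.
    apply abs_RInt_le_const; auto. apply (ex_RInt_continuous (V := R_CompleteNormedModule)); auto.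
  - rewrite Rmin_right, Rmax_left in Hb by lra. rewrite (Rabs_left (b - a)) by lra.
    rewrite <- opp_RInt_swap by (apply (ex_RInt_continuous (V := R_CompleteNormedModule)); auto).
    assert (Rabs (RInt g b a) <= (a - b) * K).
    { apply abs_RInt_le_const; auto. lra. apply (ex_RInt_continuous (V := R_CompleteNormedModule)); auto. }
    replace (opp (RInt g b a)) with (- RInt g b a) by reflexivity. rewrite Rabs_Ropp. lra.
Qed.

Lemma RInt_diff (g : R -> R) a t t' : (forall u, continuous g u) ->
  RInt g a t - RInt g a t' = RInt g t' t.
Proof.
  intros Hc. rewrite <- (RInt_Chasles g a t' t) by (apply (ex_RInt_continuous (V := R_CompleteNormedModule)); auto).
  replace (plus (RInt g a t') (RInt g t' t)) with (RInt g a t' + RInt g t' t) by reflexivity. ring.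
Qed.

Lemma RInt_sub (f g : R -> R) a b : (forall u, continuous f u) -> (forall u, continuous g u) ->
  RInt f a b - RInt g a b = RInt (fun u => f u - g u) a b.
Proof.
  intros Hf Hg. rewrite (RInt_minus f g) by (apply (ex_RInt_continuous (V := R_CompleteNormedModule)); auto). reflexivity.
Qed.

Lemma cont_sub (f g : R -> R) : (forall u, continuous f u) -> (forall u, continuous g u) ->
  forall u, continuous (fun u => f u - g u) u.
Proof. intros Hf Hg u. apply (continuous_minus f g); auto. Qed.

Lemma small_zero a K : 0 <= K -> (forall n, a <= K * (1/2)^n) -> a <= 0.
Proof.
  intros HK H. destruct (Rle_or_lt a 0); auto. exfalso.
  destruct (pow_lt_1_zero (1/2) ltac:(rewrite Rabs_right; lra) (a / (K + 1)) ltac:(apply Rdiv_lt_0_compat; lra)) as [N HN].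
  specialize (HN N (le_n N)). specialize (H N). rewrite Rabs_right in HN by (apply Rle_ge, pow_le; lra).
  assert (K * (1/2)^N <= (K+1) * (1/2)^N) by (apply Rmult_le_compat_r; [apply pow_le|]; lra).
  assert ((K+1) * (1/2)^N < (K+1) * (a / (K+1))) by (apply Rmult_lt_compat_l; lra).
  replace ((K+1) * (a / (K+1))) with a in H2 by (field; lra). lra.
Qed.

Lemma lim_abs_le (u : nat -> R) (a w K : R) : is_lim_seq u a -> (forall n, Rabs (u n - w) <= K) -> Rabs (a - w) <= K.
Proof.
  intros Hu H. assert (Hl : is_lim_seq (fun n => Rabs (u n - w)) (Rabs (a - w))).
  { apply (is_lim_seq_abs _ (Finite (a - w))). apply is_lim_seq_minus'; auto. apply is_lim_seq_const. }
  pose proof (is_lim_seq_le _ _ _ _ H Hl (is_lim_seq_const K)). simpl in H0. auto.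
Qed.

Definition pc1 (p : R*R*R) := fst (fst p).
Definition pc2 (p : R*R*R) := snd (fst p).
Definition pc3 (p : R*R*R) := snd p.
Definition csel (i : nat) (p : R*R*R) := match i with O => pc1 p | 1%nat => pc2 p | _ => pc3 p end.
Definition N3 p q := Rabs (pc1 p - pc1 q) + Rabs (pc2 p - pc2 q) + Rabs (pc3 p - pc3 q).

Fixpoint pic (f : nat -> R*R*R -> R) (t0 : R) (y : R*R*R) (n : nat) : R -> R*R*R :=
  match n with
  | O => fun _ => y
  | S n => fun t => (pc1 y + RInt (fun u => f O (pic f t0 y n u)) t0 t,
                     pc2 y + RInt (fun u => f 1%nat (pic f t0 y n u)) t0 t,
                     pc3 y + RInt (fun u => f 2%nat (pic f t0 y n u)) t0 t)
  end.

Definition good (i : nat) := (i = 0 \/ i = 1 \/ i = 2)%nat.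

Lemma pic_S f t0 y n i t : good i ->
  csel i (pic f t0 y (S n) t) = csel i y + RInt (fun u => f i (pic f t0 y n u)) t0 t.
Proof. intros [H|[H|H]]; rewrite H; reflexivity. Qed.

Lemma N3_sum p q : N3 p q = Rabs (csel 0 p - csel 0 q) + Rabs (csel 1 p - csel 1 q) + Rabs (csel 2 p - csel 2 q).
Proof. reflexivity. Qed.

Lemma N3_triang p q r : N3 p r <= N3 p q + N3 q r.
Proof.
  unfold N3.
  assert (forall a b c, Rabs (a - c) <= Rabs (a - b) + Rabs (b - c)).
  { intros. replace (a - c) with ((a - b) + (b - c)) by ring. apply Rabs_triang. }
  pose proof (H (pc1 p) (pc1 q) (pc1 r)). pose proof (H (pc2 p) (pc2 q) (pc2 r)). pose proof (H (pc3 p) (pc3 q) (pc3 r)). lra.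
Qed.

Lemma N3_sym p q : N3 p q = N3 q p.
Proof. unfold N3. rewrite (Rabs_minus_sym (pc1 p)), (Rabs_minus_sym (pc2 p)), (Rabs_minus_sym (pc3 p)). auto. Qed.

Lemma sum3 (P : nat -> R) K : (forall i, good i -> P i <= K) -> P 0%nat + P 1%nat + P 2%nat <= 3 * K.
Proof. intros H. pose proof (H 0%nat (or_introl eq_refl)). pose proof (H 1%nat (or_intror (or_introl eq_refl))).
  pose proof (H 2%nat (or_intror (or_intror eq_refl))). lra. Qed.

Lemma half_pow_le1 k : 0 <= (1/2)^k <= 1.
Proof. induction k; simpl; lra. Qed.

Lemma half_pow_mono N n : (N <= n)%nat -> (1/2)^n <= (1/2)^N.
Proof.
  intros H. replace n with (N + (n - N))%nat by lia. rewrite pow_add.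
  pose proof (half_pow_le1 N). pose proof (half_pow_le1 (n - N)). nra.
Qed.

Definition clampT t0 h t := Rmax (t0 - h) (Rmin (t0 + h) t).

Lemma clampT_prop t0 h t : 0 <= h -> Rabs (clampT t0 h t - t0) <= h /\ (Rabs (t - t0) <= h -> clampT t0 h t = t).
Proof.
  intros Hh. unfold clampT. split.
  - apply Rabs_le. destruct (Rle_dec (t0 + h) t).
    rewrite Rmin_left by lra. rewrite Rmax_right by lra. lra.
    rewrite Rmin_right by lra. destruct (Rle_dec (t0 - h) t). rewrite Rmax_right by lra; lra. rewrite Rmax_left by lra; lra.
  - intros Ht. apply Rabs_le_between in Ht. rewrite Rmin_right by lra. rewrite Rmax_right by lra. auto.
Qed.

Lemma clampT_lip t0 h t t' : Rabs (clampT t0 h t - clampT t0 h t') <= Rabs (t - t').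
Proof.
  unfold clampT. unfold Rmax, Rmin. repeat destruct Rle_dec; apply Rabs_le; apply Rabs_le_between' || idtac;
  try (rewrite Rminus_diag; pose proof (Rabs_pos (t - t')); split; lra).
  all: try (split; [apply Ropp_le_cancel; rewrite Ropp_involutive|]); try (apply Rabs_le_between in H; lra).
  all: try (destruct (Rle_dec t t'); [rewrite (Rabs_left1 (t - t')) by lra|rewrite (Rabs_right (t - t')) by lra]; lra).
Qed.

Lemma pm1 (a b : R) : a + b - a = b.
Proof. ring. Qed.
Lemma pm2 (a b c : R) : a + b - (a + c) = b - c.
Proof. ring. Qed.

Lemma fP_cont (f : nat -> R*R*R -> R) L M (g : R -> R*R*R) : 0 <= L ->
  (forall i p q, good i -> Rabs (f i p - f i q) <= L * N3 p q) ->
  (forall i t t', good i -> Rabs (csel i (g t) - csel i (g t')) <= M * Rabs (t - t')) ->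
  forall i u, good i -> continuous (fun u => f i (g u)) u.
Proof.
  intros HL0 HL Hg i u Hi. apply (lip_cont _ (L * (3 * M))).
  { intros t t'. eapply Rle_trans. apply HL; auto.
    rewrite N3_sum. replace (L * (3 * M) * Rabs (t - t')) with (L * (3 * (M * Rabs (t - t')))) by ring.
    apply Rmult_le_compat_l; auto. apply (sum3 (fun i => Rabs (csel i (g t) - csel i (g t')))). auto. }
Qed.

Lemma picard_core (f : nat -> R*R*R -> R) L M h t0 y :
  (forall i p q, good i -> Rabs (f i p - f i q) <= L * N3 p q) ->
  (forall i p, good i -> Rabs (f i p) <= M) ->
  0 <= L -> 0 <= M -> 0 < h -> 3 * h * L <= 1/2 ->
  exists phi : nat -> R -> R,
    (forall i, good i -> phi i t0 = csel i y) /\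
    (forall i t, good i -> Rabs (t - t0) < h -> is_derive (phi i) t (f i (phi 0%nat t, phi 1%nat t, phi 2%nat t))) /\
    (forall i t, good i -> Rabs (phi i t - csel i y) <= M * Rabs (t - t0)).
Proof.
  intros HL HM HL0 HM0 Hh Hsm.
  set (P := pic f t0 y).
  assert (Plip : forall n i t t', good i -> Rabs (csel i (P n t) - csel i (P n t')) <= M * Rabs (t - t')).
  { induction n; intros i t t' Hi.
    - simpl. rewrite Rminus_diag, Rabs_R0. pose proof (Rabs_pos (t - t')). nra.
    - unfold P. rewrite !pic_S by auto. fold P.
      replace (csel i y + RInt (fun u => f i (P n u)) t0 t - (csel i y + RInt (fun u => f i (P n u)) t0 t'))
        with (RInt (fun u => f i (P n u)) t0 t - RInt (fun u => f i (P n u)) t0 t') by ring.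
      assert (Hc := fP_cont f L M (P n) HL0 HL IHn i).
      rewrite RInt_diff by (intros; apply Hc; auto).
      apply RInt_bound. intros; apply Hc; auto. intros; apply HM; auto. }
  assert (Pcont : forall n i u, good i -> continuous (fun u => f i (P n u)) u).
  { intros n. apply (fP_cont f L M (P n) HL0 HL (Plip n)). }
  set (K0 := 3 * M * h).
  assert (HK0 : 0 <= K0) by (unfold K0; nra).
  assert (Pdiff : forall n t, Rabs (t - t0) <= h -> N3 (P (S n) t) (P n t) <= K0 * (1/2)^n).
  { induction n; intros t Ht.
    - rewrite N3_sum. simpl pow. rewrite Rmult_1_r. unfold K0. replace (3 * M * h) with (3 * (M * h)) by ring.
      apply (sum3 (fun i => Rabs (csel i (P 1%nat t) - csel i (P 0%nat t)))). intros i Hi.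
      unfold P. rewrite pic_S by auto. fold P. simpl (P 0%nat t).
      rewrite pm1.
      eapply Rle_trans. apply RInt_bound. intros; apply Pcont; auto. intros; apply HM; auto.
      apply Rmult_le_compat_l; auto.
    - rewrite N3_sum.
      replace (K0 * (1/2)^(S n)) with (3 * (L * (K0 * (1/2)^n) * h) + (K0 * (1/2)^(S n) - 3 * (L * (K0 * (1/2)^n) * h))) by ring.
      assert (0 <= K0 * (1/2)^(S n) - 3 * (L * (K0 * (1/2)^n) * h)).
      { simpl. pose proof (half_pow_le1 n). assert (0 <= K0 * (1/2)^n) by nra. nra. }
      cut (Rabs (csel 0 (P (S (S n)) t) - csel 0 (P (S n) t)) + Rabs (csel 1 (P (S (S n)) t) - csel 1 (P (S n) t)) +
        Rabs (csel 2 (P (S (S n)) t) - csel 2 (P (S n) t)) <= 3 * (L * (K0 * (1 / 2) ^ n) * h)); [lra|].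
      apply (sum3 (fun i => Rabs (csel i (P (S (S n)) t) - csel i (P (S n) t)))). intros i Hi.
      unfold P. rewrite !pic_S by auto. fold P.
      replace (csel i y + RInt (fun u => f i (P (S n) u)) t0 t - (csel i y + RInt (fun u => f i (P n u)) t0 t))
        with (RInt (fun u => f i (P (S n) u)) t0 t - RInt (fun u => f i (P n u)) t0 t) by ring.
      rewrite RInt_sub by (intros; apply Pcont; auto).
      eapply Rle_trans. apply RInt_bound. apply cont_sub; intros; apply Pcont; auto.
      + intros u Hu. eapply Rle_trans. apply HL; auto. apply Rmult_le_compat_l; auto. apply IHn.
        apply Rabs_le_between in Ht. apply Rabs_le.
        destruct (Rle_dec t0 t); [rewrite Rmin_left, Rmax_right in Hu|rewrite Rmin_right, Rmax_left in Hu]; lra.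
      + apply Rmult_le_compat_l; auto. apply Rmult_le_pos; auto. pose proof (half_pow_le1 n). nra. }
  assert (Pcau : forall n k t, Rabs (t - t0) <= h -> N3 (P (n + k)%nat t) (P n t) <= 2 * K0 * ((1/2)^n - (1/2)^(n+k))).
  { intros n k t Ht. induction k.
    - rewrite Nat.add_0_r. unfold N3. rewrite !Rminus_diag, Rabs_R0. lra.
    - eapply Rle_trans. apply (N3_triang _ (P (n + k)%nat t)).
      replace (n + S k)%nat with (S (n + k)) by lia. pose proof (Pdiff (n + k)%nat t Ht).
      replace (n + k + 1)%nat with (S (n+k)) by lia. change ((1/2)^S (n+k)) with (1/2 * (1/2)^(n+k)). lra. }
  assert (Pcau' : forall i n m t, good i -> Rabs (t - t0) <= h -> (n <= m)%nat ->
      Rabs (csel i (P m t) - csel i (P n t)) <= 2 * K0 * (1/2)^n).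
  { intros i n m t Hi Ht Hnm. replace m with (n + (m - n))%nat by lia.
    eapply Rle_trans; [|eapply Rle_trans; [apply (Pcau n (m - n)%nat t Ht)|]].
    - rewrite N3_sum. destruct Hi as [ -> | [ -> | -> ]];
      pose proof (Rabs_pos (csel 0 (P (n + (m - n))%nat t) - csel 0 (P n t)));
      pose proof (Rabs_pos (csel 1 (P (n + (m - n))%nat t) - csel 1 (P n t)));
      pose proof (Rabs_pos (csel 2 (P (n + (m - n))%nat t) - csel 2 (P n t))); lra.
    - pose proof (half_pow_le1 (n + (m - n))). nra. }
  assert (Pconv : forall i t, good i -> Rabs (t - t0) <= h ->
     is_lim_seq (fun n => csel i (P n t)) (real (Lim_seq (fun n => csel i (P n t))))).
  { intros i t Hi Ht. apply Lim_seq_correct'. apply ex_lim_seq_cauchy_corr.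
    intros eps. destruct (pow_lt_1_zero (1/2) ltac:(rewrite Rabs_right; lra) (eps / (2 * K0 + 1)) ltac:(apply Rdiv_lt_0_compat; [apply cond_pos|lra])) as [N HN].
    exists N. intros n m Hn Hm.
    assert (HNb : 2 * K0 * (1/2)^N < eps).
    { specialize (HN N (le_n N)). rewrite Rabs_right in HN by (apply Rle_ge, pow_le; lra).
      pose proof (cond_pos eps). pose proof (half_pow_le1 N).
      assert (2 * K0 * (1/2)^N <= (2 * K0 + 1) * (1/2)^N) by nra.
      assert ((2 * K0 + 1) * (1/2)^N < (2 * K0 + 1) * (eps / (2 * K0 + 1))) by (apply Rmult_lt_compat_l; lra).
      replace ((2 * K0 + 1) * (eps / (2 * K0 + 1))) with (pos eps) in H2 by (field; lra). lra. }
    destruct (Nat.le_ge_cases n m) as [Hnm|Hnm].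
    - rewrite Rabs_minus_sym. eapply Rle_lt_trans. apply Pcau'; auto.
      eapply Rle_lt_trans; [|exact HNb]. apply Rmult_le_compat_l. lra. apply half_pow_mono; auto.
    - eapply Rle_lt_trans. apply Pcau'; auto.
      eapply Rle_lt_trans; [|exact HNb]. apply Rmult_le_compat_l. lra. apply half_pow_mono; auto. }
  set (phi := fun i t => real (Lim_seq (fun n => csel i (P n (clampT t0 h t))))).
  exists phi.
  assert (Hcl : forall t, Rabs (clampT t0 h t - t0) <= h) by (intros; apply clampT_prop; lra).
  assert (Ptail : forall i t n, good i -> Rabs (phi i t - csel i (P n (clampT t0 h t))) <= 2 * K0 * (1/2)^n).
  { intros i t n Hi. unfold phi. apply lim_abs_le with (u := fun k => csel i (P (k + n)%nat (clampT t0 h t))).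
    - apply (is_lim_seq_incr_n (fun k => csel i (P k (clampT t0 h t))) n). apply Pconv; auto.
    - intros k. apply Pcau'; auto. lia. }
  assert (Phlip : forall i t t', good i -> Rabs (phi i t - phi i t') <= M * Rabs (t - t')).
  { intros i t t' Hi. unfold phi.
    assert (Hl := is_lim_seq_minus' _ _ _ _ (Pconv i _ Hi (Hcl t)) (Pconv i _ Hi (Hcl t'))).
    replace (real (Lim_seq (fun n => csel i (P n (clampT t0 h t)))) - real (Lim_seq (fun n => csel i (P n (clampT t0 h t')))))
      with ((real (Lim_seq (fun n => csel i (P n (clampT t0 h t)))) - real (Lim_seq (fun n => csel i (P n (clampT t0 h t'))))) - 0) by ring.
    apply (lim_abs_le _ _ _ _ Hl). intros n. rewrite Rminus_0_r.
    eapply Rle_trans. apply Plip; auto. apply Rmult_le_compat_l; auto. apply clampT_lip. }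
  set (Phi := fun t => (phi 0%nat t, phi 1%nat t, phi 2%nat t)).
  assert (Phic : forall i u, good i -> continuous (fun u => f i (Phi u)) u).
  { intros i u Hi. apply (fP_cont f L M Phi HL0 HL); auto. intros j t t' Hj. destruct Hj as [ -> | [ -> | -> ]]; apply Phlip; unfold good; auto. }
  assert (Hphi0 : forall i, good i -> phi i t0 = csel i y).
  { intros i Hi. unfold phi. rewrite (proj2 (clampT_prop t0 h t0 ltac:(lra))) by (rewrite Rminus_diag, Rabs_R0; lra).
    assert (Hc : forall n, csel i (P n t0) = csel i y).
    { intros [|n]. reflexivity. unfold P. rewrite pic_S by auto. rewrite RInt_point. simpl. unfold zero; simpl. ring. }
    rewrite (Lim_seq_ext _ (fun _ => csel i y)) by auto. rewrite Lim_seq_const. reflexivity. }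
  assert (Hint : forall i t, good i -> Rabs (t - t0) < h -> phi i t = csel i y + RInt (fun u => f i (Phi u)) t0 t).
  { intros i t Hi Ht.
    assert (Habs : Rabs (phi i t - (csel i y + RInt (fun u => f i (Phi u)) t0 t)) <= 0).
    { apply (small_zero _ (K0 + 6 * L * K0 * h)). { apply Rplus_le_le_0_compat; auto. repeat apply Rmult_le_pos; lra. } intros n.
      assert (Hct : clampT t0 h t = t) by (apply clampT_prop; lra).
      pose proof (Ptail i t (S n) Hi) as T1. rewrite Hct in T1. unfold P in T1. rewrite pic_S in T1 by auto. fold P in T1.
      assert (T2 : Rabs (RInt (fun u => f i (P n u)) t0 t - RInt (fun u => f i (Phi u)) t0 t) <= (L * (3 * (2 * K0 * (1/2)^n))) * h).
      { rewrite RInt_sub by (intros; first [apply Pcont | apply Phic]; auto).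
        eapply Rle_trans. apply RInt_bound. apply cont_sub. intros; apply Pcont; auto. intros; apply Phic; auto.
        - intros u Hu. eapply Rle_trans. apply HL; auto. apply Rmult_le_compat_l; auto.
          assert (Hu' : Rabs (u - t0) <= h).
          { apply Rabs_def2 in Ht. apply Rabs_le.
            destruct (Rle_dec t0 t); [rewrite Rmin_left, Rmax_right in Hu|rewrite Rmin_right, Rmax_left in Hu]; lra. }
          assert (Hcu : clampT t0 h u = u) by (apply clampT_prop; lra).
          rewrite N3_sum. apply (sum3 (fun j => Rabs (csel j (P n u) - csel j (Phi u)))). intros j Hj.
          rewrite Rabs_minus_sym. pose proof (Ptail j u n Hj) as T. rewrite Hcu in T.
          destruct Hj as [ -> | [ -> | -> ]]; exact T.
        - apply Rmult_le_compat_l. apply Rmult_le_pos; auto. pose proof (half_pow_le1 n). nra. left; auto. }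
      replace (phi i t - (csel i y + RInt (fun u => f i (Phi u)) t0 t)) with
        ((phi i t - (csel i y + RInt (fun u => f i (P n u)) t0 t)) + (RInt (fun u => f i (P n u)) t0 t - RInt (fun u => f i (Phi u)) t0 t)) by ring.
      eapply Rle_trans. apply Rabs_triang. simpl pow in T1. pose proof (half_pow_le1 n). nra. }
    pose proof (Rabs_pos (phi i t - (csel i y + RInt (fun u => f i (Phi u)) t0 t))).
    assert (Rabs (phi i t - (csel i y + RInt (fun u => f i (Phi u)) t0 t)) = 0) by lra.
    apply Rabs_eq_0 in H0. lra. }
  split; [|split]; auto.
  - intros i t Hi Ht. apply is_derive_ext_loc with (f := fun s => csel i y + RInt (fun u => f i (Phi u)) t0 s).
    + assert (Hd : 0 < h - Rabs (t - t0)) by lra. exists (mkposreal _ Hd). intros s Hs.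
      unfold ball in Hs; simpl in Hs; unfold AbsRing_ball, abs, minus, plus, opp in Hs; simpl in Hs.
      symmetry. apply Hint; auto. replace (s - t0) with ((s - t) + (t - t0)) by ring.
      eapply Rle_lt_trans. apply Rabs_triang. fold (Rminus s t) in Hs. lra.
    + replace (f i (phi 0%nat t, phi 1%nat t, phi 2%nat t)) with (plus zero (f i (Phi t))).
      apply (is_derive_plus (fun _ => csel i y) (fun s => RInt (fun u => f i (Phi u)) t0 s)).
      apply (is_derive_const (K := R_AbsRing) (V := R_NormedModule)).
      apply (is_derive_RInt (fun u => f i (Phi u)) (fun s => RInt (fun u => f i (Phi u)) t0 s) t0). 2: intros; apply Phic; auto.
      apply filter_forall. intros s. apply (RInt_correct (V := R_CompleteNormedModule)).
      apply (ex_RInt_continuous (V := R_CompleteNormedModule)). intros; intros; apply Phic; auto.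
      unfold plus, zero; simpl. rewrite Rplus_0_l. reflexivity.
  - intros i t Hi. rewrite <- (Hphi0 i Hi). apply Phlip; auto.
Qed.

Lemma loc_ball (P : R -> Prop) t d : 0 < d -> (forall s, Rabs (s - t) < d -> P s) -> locally t P.
Proof.
  intros Hd H. exists (mkposreal d Hd). intros s Hs. apply H.
  unfold ball in Hs; simpl in Hs; unfold AbsRing_ball, abs, minus, plus, opp in Hs; simpl in Hs. exact Hs.
Qed.

Definition vf alpha c B (i : nat) (p : R*R*R) : R :=
  match i with
  | O => cos (pc3 p)
  | 1%nat => sin (pc3 p)
  | _ => Fp alpha (clampT ((c + B)/2) ((B - c)/2) (pc1 p)) (clampT 0 B (pc2 p)) (pc3 p)
  end.

Lemma vf_lip alpha c B i p q : 0 <= alpha -> 0 < c -> c <= B -> good i ->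
  Rabs (vf alpha c B i p - vf alpha c B i q) <= (1 + LF alpha c B) * N3 p q.
Proof.
  intros Ha Hc HcB Hi.
  assert (HLF := LF_nonneg alpha c B Ha Hc ltac:(lra)).
  assert (HN : Rabs (pc3 p - pc3 q) <= N3 p q) by (unfold N3; pose proof (Rabs_pos (pc1 p - pc1 q)); pose proof (Rabs_pos (pc2 p - pc2 q)); lra).
  assert (HN0 : 0 <= N3 p q) by (pose proof (Rabs_pos (pc3 p - pc3 q)); lra).
  destruct Hi as [ -> | [ -> | -> ]]; simpl.
  - eapply Rle_trans. apply cos_lip. nra.
  - eapply Rle_trans. apply sin_lip. nra.
  - set (X1 := clampT ((c + B)/2) ((B - c)/2) (pc1 p)). set (X2 := clampT ((c + B)/2) ((B - c)/2) (pc1 q)).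
    set (Z1 := clampT 0 B (pc2 p)). set (Z2 := clampT 0 B (pc2 q)).
    destruct (clampT_prop ((c + B)/2) ((B - c)/2) (pc1 p) ltac:(lra)) as [A1 _].
    destruct (clampT_prop ((c + B)/2) ((B - c)/2) (pc1 q) ltac:(lra)) as [A2 _].
    destruct (clampT_prop 0 B (pc2 p) ltac:(lra)) as [A3 _].
    destruct (clampT_prop 0 B (pc2 q) ltac:(lra)) as [A4 _].
    fold X1 in A1. fold X2 in A2. fold Z1 in A3. fold Z2 in A4. rewrite Rminus_0_r in A3, A4.
    apply Rabs_le_between in A1. apply Rabs_le_between in A2.
    eapply Rle_trans. apply (Fp_lip alpha c B); auto; try lra; apply Rabs_le; lra.
    unfold Dst. pose proof (clampT_lip ((c + B)/2) ((B - c)/2) (pc1 p) (pc1 q)). pose proof (clampT_lip 0 B (pc2 p) (pc2 q)).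
    fold X1 X2 Z1 Z2 in H, H0.
    assert (Rabs (X1 - X2) + Rabs (Z1 - Z2) + Rabs (pc3 p - pc3 q) <= N3 p q) by (unfold N3; lra).
    assert (LF alpha c B * (Rabs (X1 - X2) + Rabs (Z1 - Z2) + Rabs (pc3 p - pc3 q)) <= LF alpha c B * N3 p q) by (apply Rmult_le_compat_l; auto).
    unfold LF in *. lra.
Qed.

Lemma vf_bound alpha c B i p : 0 <= alpha -> 0 < c -> c <= B -> good i ->
  Rabs (vf alpha c B i p) <= 1 + (alpha * (2 * B / c^2) + 1 / c).
Proof.
  intros Ha Hc HcB Hi.
  assert (0 <= alpha * (2 * B / c^2) + 1 / c).
  { apply Rplus_le_le_0_compat. apply Rmult_le_pos; auto. apply Rmult_le_pos. lra. left; apply Rinv_0_lt_compat; nra.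
    left; apply Rdiv_lt_0_compat; lra. }
  destruct Hi as [ -> | [ -> | -> ]]; unfold vf; cbv iota beta.
  - pose proof (COS_bound (pc3 p)). assert (Rabs (cos (pc3 p)) <= 1) by (apply Rabs_le; lra). lra.
  - pose proof (SIN_bound (pc3 p)). assert (Rabs (sin (pc3 p)) <= 1) by (apply Rabs_le; lra). lra.
  - destruct (clampT_prop ((c + B)/2) ((B - c)/2) (pc1 p) ltac:(lra)) as [A1 _].
    destruct (clampT_prop 0 B (pc2 p) ltac:(lra)) as [A3 _]. rewrite Rminus_0_r in A3.
    apply Rabs_le_between in A1.
    assert (Rabs (Fp alpha (clampT ((c + B) / 2) ((B - c) / 2) (pc1 p)) (clampT 0 B (pc2 p)) (pc3 p)) <= alpha * (2 * B / c^2) + 1 / c).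
    { apply Fp_bound; auto; try lra. apply Rabs_le; lra. }
    lra.
Qed.

Lemma glue_left (f g : R -> R) beta s : s < beta ->
  locally s (fun v => f v = (if Rlt_dec v beta then f v else g v)).
Proof.
  intros Hs. apply (loc_ball _ s (beta - s)). lra. intros v Hv. apply Rabs_def2 in Hv.
  destruct (Rlt_dec v beta); [auto|lra].
Qed.

Lemma glue_right (f g : R -> R) beta t0 h s : (forall u, t0 <= u < beta -> f u = g u) -> t0 < beta ->
  beta <= s < t0 + h -> locally s (fun v => g v = (if Rlt_dec v beta then f v else g v)).
Proof.
  intros Hag Ht Hs. apply (loc_ball _ s (Rmin (s - t0) (t0 + h - s))). apply Rmin_glb_lt; lra.
  intros v Hv. pose proof (Rmin_l (s - t0) (t0 + h - s)). pose proof (Rmin_r (s - t0) (t0 + h - s)).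
  apply Rabs_def2 in Hv. destruct (Rlt_dec v beta); [|auto]. symmetry. apply Hag. lra.
Qed.

Lemma b_infinite alpha a b x z psi : 0 < alpha -> is_maximal_solution alpha a b x z psi -> b = p_infty.
Proof.
  intros Hal [H Hmax].
  destruct (sol_basic _ _ _ _ _ _ H) as [Ha [Hb [Hx0 [Hz0 Hp0]]]].
  destruct b as [beta | | ]; [ | reflexivity | simpl in Hb; contradiction].
  exfalso. simpl in Hb.
  assert (HI : forall s, 0 <= s < beta -> in_oint a beta s).
  { intros s Hs. split; simpl; [destruct a; simpl in *; auto; lra | lra]. }
  set (c := x (beta/2) / 2).
  assert (Hc : 0 < c).
  { unfold c. assert (0 < x (beta/2)) by (apply (x_sign _ _ _ _ _ _ Hal H); [apply HI|]; lra). lra. }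
  assert (Hxb2 : x (beta/2) <= beta/2).
  { assert (Hb2 : 0 <= beta/2) by lra. assert (Hi2 := HI (beta/2) ltac:(lra)). destruct (xz_growth _ _ _ _ _ _ (beta/2) H Hb2 Hi2) as [A _]. apply Rabs_le_between in A. lra. }
  set (B := beta + 2).
  assert (HcB : c <= B) by (unfold c, B; lra).
  set (LL := 1 + LF alpha c B).
  assert (HLL : 1 <= LL) by (unfold LL; pose proof (LF_nonneg alpha c B ltac:(lra) Hc ltac:(unfold B; lra)); lra).
  set (MM := 1 + (alpha * (2 * B / c^2) + 1 / c)).
  assert (HMM : 1 <= MM).
  { unfold MM. assert (0 <= alpha * (2 * B / c^2) + 1 / c); [|lra].
    apply Rplus_le_le_0_compat. apply Rmult_le_pos. lra. unfold Rdiv. apply Rmult_le_pos. unfold B; lra.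
    left; apply Rinv_0_lt_compat; nra. left; apply Rdiv_lt_0_compat; lra. }
  set (h := Rmin (Rmin c 1 / MM) (1 / (6 * LL))).
  assert (Hmc : 0 < Rmin c 1) by (apply Rmin_glb_lt; lra).
  assert (Hh0 : 0 < h) by (unfold h; apply Rmin_glb_lt; apply Rdiv_lt_0_compat; lra).
  assert (HhM : h * MM <= Rmin c 1).
  { assert (h <= Rmin c 1 / MM) by apply Rmin_l.
    assert (h * MM <= Rmin c 1 / MM * MM) by (apply Rmult_le_compat_r; lra).
    replace (Rmin c 1 / MM * MM) with (Rmin c 1) in H1 by (field; lra). lra. }
  pose proof (Rmin_l c 1). pose proof (Rmin_r c 1).
  assert (HhL : 6 * h * LL <= 1).
  { assert (h <= 1 / (6 * LL)) by apply Rmin_r.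
    assert (h * (6 * LL) <= 1 / (6 * LL) * (6 * LL)) by (apply Rmult_le_compat_r; lra).
    replace (1 / (6 * LL) * (6 * LL)) with 1 in H3 by (field; lra). lra. }
  set (t0 := beta - Rmin h beta / 2).
  pose proof (Rmin_l h beta). pose proof (Rmin_r h beta).
  assert (Hmh : 0 < Rmin h beta) by (apply Rmin_glb_lt; lra).
  assert (Ht0 : beta / 2 <= t0 < beta /\ beta < t0 + h /\ 0 < t0 /\ beta - t0 <= h / 2) by (unfold t0; lra).
  set (y := (x t0, z t0, psi t0)).
  destruct (picard_core (vf alpha c B) LL MM h t0 y) as [phi [Hph0 [Hphd Hphb]]]; try lra.
  { intros i p q Hi. apply vf_lip; auto; lra. }
  { intros i p Hi. apply vf_bound; auto; lra. }
  assert (Hxt0 : 2 * c <= x t0 <= beta).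
  { split. unfold c. destruct (Req_dec t0 (beta/2)) as [E|E]. rewrite E; lra.
    left. replace (2 * (x (beta / 2) / 2)) with (x (beta/2)) by field. apply (x_incr _ _ _ _ _ _ Hal H); try apply HI; lra.
    destruct (xz_growth _ _ _ _ _ _ t0 H ltac:(lra) (HI t0 ltac:(lra))) as [A _]. apply Rabs_le_between in A. lra. }
  assert (Hzt0 : Rabs (z t0) <= 1 + beta).
  { destruct (xz_growth _ _ _ _ _ _ t0 H ltac:(lra) (HI t0 ltac:(lra))) as [_ A]. lra. }
  assert (Hwin : forall t, Rabs (t - t0) < h -> c <= phi 0%nat t <= beta + 1 /\ Rabs (phi 1%nat t) <= B).
  { intros t Ht. pose proof (Hphb 0%nat t (or_introl eq_refl)) as K5. pose proof (Hphb 1%nat t (or_intror (or_introl eq_refl))) as K6.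
    simpl csel in K5, K6. unfold pc1, pc2, y in K5, K6; simpl in K5, K6.
    assert (K7 : MM * Rabs (t - t0) <= MM * h) by (apply Rmult_le_compat_l; lra).
    apply Rabs_le_between in K5. split. lra.
    assert (K8 : Rabs (phi 1%nat t - z t0) <= 1) by lra.
    unfold B. apply Rabs_le_between in K8. apply Rabs_le_between in Hzt0. apply Rabs_le. lra. }
  assert (Hder : forall t, Rabs (t - t0) < h ->
     is_derive (phi 0%nat) t (cos (phi 2%nat t)) /\ is_derive (phi 1%nat) t (sin (phi 2%nat t)) /\
     is_derive (phi 2%nat) t (Fp alpha (phi 0%nat t) (phi 1%nat t) (phi 2%nat t))).
  { intros t Ht. destruct (Hwin t Ht) as [W1 W2].
    split; [|split].
    - apply (Hphd 0%nat t (or_introl eq_refl) Ht).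
    - apply (Hphd 1%nat t (or_intror (or_introl eq_refl)) Ht).
    - pose proof (Hphd 2%nat t (or_intror (or_intror eq_refl)) Ht) as D. unfold vf, pc1, pc2, pc3 in D; simpl in D.
      rewrite (proj2 (clampT_prop ((c + B)/2) ((B - c)/2) (phi 0%nat t) ltac:(lra))) in D by (apply Rabs_le; unfold B in *; lra).
      rewrite (proj2 (clampT_prop 0 B (phi 1%nat t) ltac:(unfold B; lra))) in D by (rewrite Rminus_0_r; auto).
      exact D. }
  assert (Hag : forall u, t0 <= u < beta -> x u = phi 0%nat u /\ z u = phi 1%nat u /\ psi u = phi 2%nat u).
  { intros u Hu. apply (reg_unique alpha c B t0 u x z psi (phi 0%nat) (phi 1%nat) (phi 2%nat)); try lra.
    - intros v Hv. assert (Hv0 : v <> 0) by lra. pose proof (HI v ltac:(lra)) as Iv.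
      split; [|split]. apply (sol_dx _ _ _ _ _ _ _ H Iv). apply (sol_dz _ _ _ _ _ _ _ H Iv). apply (sol_dp _ _ _ _ _ _ _ H Iv Hv0).
    - intros v Hv. apply Hder. apply Rabs_def1; lra.
    - intros v Hv. destruct (Hwin v ltac:(apply Rabs_def1; lra)) as [W1 W2].
      destruct (xz_growth _ _ _ _ _ _ v H ltac:(lra) (HI v ltac:(lra))) as [G1 G2].
      assert (x t0 <= x v) by (destruct (Req_dec v t0) as [->|]; [lra|left; apply (x_incr _ _ _ _ _ _ Hal H); try apply HI; lra]).
      split; [lra|]. split; [lra|].
      split; [apply Rabs_le_between in G1; apply Rabs_le; unfold B; lra|].
      split; [apply Rabs_le_between in G2; apply Rabs_le; unfold B; lra|].
      split; [apply Rabs_le; unfold B; lra|]. exact W2.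
    - rewrite (Hph0 0%nat (or_introl eq_refl)). reflexivity.
    - rewrite (Hph0 1%nat (or_intror (or_introl eq_refl))). reflexivity.
    - rewrite (Hph0 2%nat (or_intror (or_intror eq_refl))). reflexivity.
    - assert (2 + LF alpha c B <= 2 * LL) by (unfold LL; pose proof (LF_nonneg alpha c B ltac:(lra) Hc ltac:(unfold B; lra)); lra).
      assert ((u - t0) * (2 + LF alpha c B) <= (h / 2) * (2 * LL)).
      { pose proof (LF_nonneg alpha c B ltac:(lra) Hc ltac:(unfold B; lra)). apply Rmult_le_compat; lra. }
      lra. }
  set (X := fun s => if Rlt_dec s beta then x s else phi 0%nat s).
  set (Z := fun s => if Rlt_dec s beta then z s else phi 1%nat s).
  set (P := fun s => if Rlt_dec s beta then psi s else phi 2%nat s).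
  assert (Hsol : is_solution alpha a (Finite (t0 + h)) X Z P).
  { assert (E0 : forall f g : R -> R, (if Rlt_dec 0 beta then f 0 else g 0) = f 0).
    { intros. destruct (Rlt_dec 0 beta); [auto|lra]. }
    split; [auto|]. split; [simpl; lra|].
    split; [unfold X; rewrite E0; auto|]. split; [unfold Z; rewrite E0; auto|]. split; [unfold P; rewrite E0; auto|].
    assert (Hcase : forall s, in_oint a (Finite (t0 + h)) s -> (s < beta /\ in_oint a beta s) \/ (beta <= s /\ Rabs (s - t0) < h)).
    { intros s [Hs1 Hs2]. simpl in Hs2. destruct (Rlt_dec s beta). left; split; auto. split; simpl; auto.
      right. split. lra. apply Rabs_def1; lra. }
    split.
    - intros s Hs. destruct (Hcase s Hs) as [[Hl Hi]|[Hr Hw]].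
      + assert (EP : P s = psi s) by (unfold P; destruct (Rlt_dec s beta); [auto|lra]).
        rewrite EP. split; [|split].
        * apply (is_derive_ext_loc x X). apply glue_left; auto. apply (sol_dx _ _ _ _ _ _ _ H Hi).
        * apply (is_derive_ext_loc z Z). apply glue_left; auto. apply (sol_dz _ _ _ _ _ _ _ H Hi).
        * destruct (sol_edp _ _ _ _ _ _ _ H Hi) as [l Hl']. exists l. apply (is_derive_ext_loc psi P). apply glue_left; auto. auto.
      + assert (EP : P s = phi 2%nat s) by (unfold P; destruct (Rlt_dec s beta); [lra|auto]).
        rewrite EP. destruct (Hder s Hw) as [D1 [D2 D3]]. split; [|split].
        * apply (is_derive_ext_loc (phi 0%nat) X). apply (glue_right x _ beta t0 h); try (apply Rabs_def2 in Hw; lra). intros; apply Hag; auto. auto.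
        * apply (is_derive_ext_loc (phi 1%nat) Z). apply (glue_right z _ beta t0 h); try (apply Rabs_def2 in Hw; lra). intros; apply Hag; auto. auto.
        * exists (Fp alpha (phi 0%nat s) (phi 1%nat s) (phi 2%nat s)).
          apply (is_derive_ext_loc (phi 2%nat) P). apply (glue_right psi _ beta t0 h); try (apply Rabs_def2 in Hw; lra). intros; apply Hag; auto. auto.
    - intros s Hs Hs0. destruct (Hcase s Hs) as [[Hl Hi]|[Hr Hw]].
      + assert (EX : X s = x s) by (unfold X; destruct (Rlt_dec s beta); [auto|lra]).
        assert (EZ : Z s = z s) by (unfold Z; destruct (Rlt_dec s beta); [auto|lra]).
        assert (EP : P s = psi s) by (unfold P; destruct (Rlt_dec s beta); [auto|lra]).
        rewrite EX, EZ, EP. split. apply (sol_xne _ _ _ _ _ _ _ H Hi Hs0).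
        apply (is_derive_ext_loc psi P). apply glue_left; auto. apply (sol_dp _ _ _ _ _ _ _ H Hi Hs0).
      + assert (EX : X s = phi 0%nat s) by (unfold X; destruct (Rlt_dec s beta); [lra|auto]).
        assert (EZ : Z s = phi 1%nat s) by (unfold Z; destruct (Rlt_dec s beta); [lra|auto]).
        assert (EP : P s = phi 2%nat s) by (unfold P; destruct (Rlt_dec s beta); [lra|auto]).
        rewrite EX, EZ, EP. destruct (Hwin s Hw). split. lra.
        destruct (Hder s Hw) as [_ [_ D3]].
        apply (is_derive_ext_loc (phi 2%nat) P). apply (glue_right psi _ beta t0 h); try (apply Rabs_def2 in Hw; lra). intros; apply Hag; auto. auto. }
  destruct (Hmax a (Finite (t0 + h)) X Z P Hsol) as [_ E].
  - apply Rbar_le_refl.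
  - simpl. lra.
  - intros s [Hs1 Hs2]. simpl in Hs2. unfold X, Z, P. destruct (Rlt_dec s beta); [auto|lra].
  - injection E. lra.
Qed.

Lemma key_ineq alpha x z S C X c1 : 0 < alpha -> 0 < c1 -> c1 <= x -> x <= X -> 0 < C ->
  C < c1 / (alpha * X) -> S^2 + C^2 = 1 -> C <= 1/2 ->
  0 < - S * (alpha * (z * C - x * S) / (x ^ 2 + z ^ 2) - S / x).
Proof.
  intros Ha Hc1 Hx HX HC HCk HSC HC2.
  assert (Hx0 : 0 < x) by lra. assert (HX0 : 0 < X) by lra.
  set (Q := x^2 + z^2). assert (HQ : 0 < Q) by (unfold Q; nra).
  assert (HS2 : 3/4 <= S^2) by nra.
  assert (HS1 : S^2 <= 1) by nra.
  replace (- S * (alpha * (z * C - x * S) / Q - S / x)) with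
    (alpha * x * S^2 / Q + S^2 / x - alpha * (S * z * C) / Q) by (field; split; lra).
  assert (T1 : 0 <= alpha * x * S^2 / Q) by (unfold Rdiv; apply Rmult_le_pos; [apply Rmult_le_pos; [apply Rmult_le_pos; lra | nra] | left; apply Rinv_0_lt_compat; lra]).
  assert (T2 : 3 / (4 * X) <= S^2 / x).
  { assert (S^2 / X <= S^2 / x) by (unfold Rdiv; apply Rmult_le_compat_l; [nra| apply Rinv_le_contravar; lra]).
    assert (3/(4*X) <= S^2/X).
    { apply (Rmult_le_reg_r X); [lra|]. replace (3/(4*X)*X) with (3/4) by (field; lra).
      replace (S^2/X*X) with (S^2) by (field; lra). lra. }
    lra. }
  assert (T3 : alpha * (S * z * C) / Q <= alpha * C / (2 * x)).
  { assert (Hz : S * z * C <= C * Rabs z).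
    { assert (Rabs S <= 1) by (apply Rabs_le; nra).
      assert (S * z <= Rabs z).
      { apply Rle_trans with (Rabs (S * z)). apply Rle_abs. rewrite Rabs_mult. pose proof (Rabs_pos z). nra. }
      nra. }
    assert (Hz2 : 2 * x * Rabs z <= Q) by (unfold Q; pose proof (pow2_ge_0 (x - z)); pose proof (pow2_ge_0 (x + z)); destruct (Rle_or_lt 0 z); [rewrite Rabs_right by lra | rewrite Rabs_left by lra]; nra).
    apply Rle_trans with (alpha * (C * Rabs z) / Q).
    unfold Rdiv. apply Rmult_le_compat_r. left; apply Rinv_0_lt_compat; lra. apply Rmult_le_compat_l; lra.
    unfold Rdiv. apply (Rmult_le_reg_r (Q * (2 * x))). nra.
    replace (alpha * (C * Rabs z) * / Q * (Q * (2 * x))) with (alpha * C * (2 * x * Rabs z)) by (field; lra).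
    replace (alpha * C * / (2 * x) * (Q * (2 * x))) with (alpha * C * Q) by (field; lra).
    apply Rmult_le_compat_l. nra. auto. }
  assert (T4 : alpha * C / (2 * x) < 1 / (2 * X)).
  { apply Rle_lt_trans with (alpha * C / (2 * c1)).
    unfold Rdiv. apply Rmult_le_compat_l. nra. apply Rinv_le_contravar; lra.
    apply (Rmult_lt_reg_r (2 * c1)). lra.
    replace (alpha * C / (2 * c1) * (2 * c1)) with (alpha * C) by (field; lra).
    apply (Rmult_lt_compat_l alpha) in HCk; auto.
    replace (alpha * (c1 / (alpha * X))) with (c1 / X) in HCk by (field; lra).
    replace (1 / (2 * X) * (2 * c1)) with (c1 / X) by (field; lra). lra. }
  assert (3 / (4 * X) - 1 / (2 * X) > 0).
  { replace (3 / (4 * X) - 1 / (2 * X)) with (1 / (4 * X)) by (field; lra). apply Rdiv_lt_0_compat; lra. }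
  lra.
Qed.

Lemma x_unbounded alpha a x z psi : 0 < alpha -> is_solution alpha a p_infty x z psi ->
  forall X, exists s, 0 <= s /\ X < x s.
Proof.
  intros Hal H X.
  destruct (sol_basic _ _ _ _ _ _ H) as [Ha [_ [Hx0 _]]].
  assert (HI : forall s, 0 <= s -> in_oint a p_infty s).
  { intros s Hs. split; simpl; auto. destruct a; simpl in *; auto; lra. }
  destruct (classic (exists s, 0 <= s /\ X < x s)) as [|Hn]; auto. exfalso.
  assert (Hbd : forall s, 0 <= s -> x s <= X).
  { intros s Hs. destruct (Rle_or_lt (x s) X); auto. exfalso. apply Hn. exists s; auto. }
  set (c1 := x 1).
  assert (Hc1 : 0 < c1) by (apply (x_sign _ _ _ _ _ _ Hal H); [apply HI|]; lra).
  assert (HX : c1 <= X) by (apply Hbd; lra).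
  set (k := Rmin (1/2) (c1 / (alpha * X))).
  assert (Hk : 0 < k) by (apply Rmin_glb_lt; [lra|apply Rdiv_lt_0_compat; nra]).
  pose proof (Rmin_l (1/2) (c1 / (alpha * X))) as Hk1. pose proof (Rmin_r (1/2) (c1 / (alpha * X))) as Hk2. fold k in Hk1, Hk2.
  set (u := fun s => cos (psi s)).
  assert (Hdu : forall s, 0 < s -> is_derive u s (Fp alpha (x s) (z s) (psi s) * - sin (psi s))).
  { intros s Hs. unfold u. apply (is_derive_comp cos psi s (- sin (psi s)) (Fp alpha (x s) (z s) (psi s))).
    auto_derive; auto; ring. apply (sol_dp _ _ _ _ _ _ _ H); [apply HI|]; lra. }
  assert (Hu1 : 0 < u 1) by (apply (cos_psi_pos _ _ _ _ _ _ Hal H); apply HI; lra).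
  set (m0 := Rmin (u 1) k).
  assert (Hm0 : 0 < m0) by (apply Rmin_glb_lt; lra).
  pose proof (Rmin_l (u 1) k) as Hm1. pose proof (Rmin_r (u 1) k) as Hm2. fold m0 in Hm1, Hm2.
  assert (Hbar : forall s, 1 <= s -> m0 <= u s).
  { intros s2 Hs2. destruct (Rle_or_lt m0 (u s2)) as [|Hlt]; auto. exfalso.
    destruct (continuity_ab_min u 1 s2 Hs2) as [p [Hmin Hp]].
    { intros c Hc. apply (derive_cont _ _ _ (Hdu c ltac:(lra))). }
    assert (Hup : u p <= u s2) by (apply Hmin; lra).
    assert (Hp1 : 1 < p).
    { destruct (Req_dec p 1) as [E|E]. rewrite E in Hup. lra. lra. }
    assert (Hl : Fp alpha (x p) (z p) (psi p) * - sin (psi p) <= 0).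
    { apply (deriv_left_min u p _ (p - 1)). lra. apply Hdu; lra. intros q Hq. apply Hmin; lra. }
    assert (Hxp : c1 <= x p) by (left; apply (x_incr _ _ _ _ _ _ Hal H); try apply HI; lra).
    assert (Hxp2 : x p <= X) by (apply Hbd; lra).
    assert (HC : 0 < u p) by (apply (cos_psi_pos _ _ _ _ _ _ Hal H); apply HI; lra).
    pose proof (key_ineq alpha (x p) (z p) (sin (psi p)) (cos (psi p)) X c1 Hal Hc1 Hxp Hxp2 HC) as K.
    assert (K' : 0 < - sin (psi p) * Fp alpha (x p) (z p) (psi p)).
    { unfold Fp. apply K. unfold u in *; lra. pose proof (sin2_cos2 (psi p)). unfold Rsqr in H0. simpl. lra.
      unfold u in *; lra. }
    lra. }
  set (s := 1 + (X - c1 + 1) / m0).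
  assert (Hs : 1 <= s) by (unfold s; assert (0 < (X - c1 + 1) / m0) by (apply Rdiv_lt_0_compat; lra); lra).
  destruct (mvt x (fun v => cos (psi v)) 1 s Hs) as [c [Hc Heq]].
  { intros v Hv. apply (sol_dx _ _ _ _ _ _ _ H). apply HI; lra. }
  assert (m0 <= cos (psi c)) by (apply (Hbar c); lra).
  assert (m0 * (s - 1) = X - c1 + 1) by (unfold s; field; lra).
  assert (x s <= X) by (apply Hbd; lra).
  fold c1 in Heq. nra.
Qed.

Lemma polar p1 p2 : exists t, sqrt (p1^2 + p2^2) * cos t = p1 /\ sqrt (p1^2 + p2^2) * sin t = p2.
Proof.
  set (r := sqrt (p1^2 + p2^2)).
  assert (Hr2 : r * r = p1^2 + p2^2) by (apply sqrt_sqrt; nra).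
  assert (Hr0 : 0 <= r) by apply sqrt_pos.
  destruct (Req_dec r 0) as [E|E].
  - exists 0. rewrite E in Hr2. assert (p1 = 0) by nra. assert (p2 = 0) by nra. rewrite E. split; lra.
  - assert (Hr : 0 < r) by lra.
    set (q := p1 / r).
    assert (Hq : -1 <= q <= 1).
    { unfold q. assert (p1^2 <= r^2) by nra.
      split; [apply (Rmult_le_reg_r r); auto; unfold Rdiv; rewrite Rmult_assoc, Rinv_l by lra; nra
             |apply (Rmult_le_reg_r r); auto; unfold Rdiv; rewrite Rmult_assoc, Rinv_l by lra; nra]. }
    assert (Hs : sin (acos q) = Rabs p2 / r).
    { rewrite sin_acos by auto. apply sqrt_lem_1.
      - unfold Rsqr. nra.
      - apply Rmult_le_pos; [apply Rabs_pos | left; apply Rinv_0_lt_compat; lra].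
      - assert (Habs : Rabs p2 * Rabs p2 = p2 * p2) by (rewrite <- Rabs_mult; apply Rabs_right; nra).
        unfold Rsqr, q. transitivity (Rabs p2 * Rabs p2 / (r*r)); [field; lra|]. rewrite Habs.
        replace (p2 * p2) with (r * r - p1 * p1) by nra. field. lra. }
    destruct (Rle_or_lt 0 p2).
    + exists (acos q). rewrite cos_acos by auto. rewrite Hs, Rabs_right by lra. unfold q. split; field; lra.
    + exists (- acos q). rewrite cos_neg, sin_neg, cos_acos by auto. rewrite Hs, Rabs_left by lra. unfold q. split; field; lra.
Qed.

Theorem mainTheorem11 (alpha : R) (a b : Rbar) (x z psi : R -> R) :
  0 < alpha ->
  is_maximal_solution alpha a b x z psi ->
  (forall s1 s2, in_oint a b s1 -> in_oint a b s2 -> x s1 = x s2 -> s1 = s2) /\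
  (forall r : R, exists s, in_oint a b s /\ x s = r) /\
  (forall p1 p2 : R, exists h : R,
     (exists s t, in_oint a b s /\ x s * cos t = p1 /\ x s * sin t = p2 /\ z s = h) /\
     (forall s t, in_oint a b s -> x s * cos t = p1 -> x s * sin t = p2 -> z s = h)).
Proof.
  intros Hal HM.
  pose proof (b_infinite _ _ _ _ _ _ Hal HM) as Eb.
  pose proof (b_infinite _ _ _ _ _ _ Hal (reflect_max _ _ _ _ _ _ HM)) as Ea.
  assert (Ea' : a = m_infty) by (destruct a; simpl in Ea; congruence).
  subst a b. clear Ea.
  destruct HM as [H _].
  pose proof (reflect_sol _ _ _ _ _ _ H) as H'. simpl in H'.
  assert (Hin : forall s, in_oint m_infty p_infty s) by (intros; split; simpl; auto).
  assert (Hsym : forall s, - x (- s) = x s /\ z (- s) = z s).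
  { intros s. destruct (full_unique _ _ _ _ _ _ _ _ _ _ _ Hal H' H s (Hin s) (Hin s)) as [A1 [A2 _]]. auto. }
  assert (Hinj : forall s1 s2, x s1 = x s2 -> s1 = s2).
  { intros s1 s2 E. destruct (Rtotal_order s1 s2) as [Hl|[Hl|Hl]]; auto.
    - pose proof (x_incr _ _ _ _ _ _ Hal H s1 s2 (Hin s1) (Hin s2) Hl). lra.
    - pose proof (x_incr _ _ _ _ _ _ Hal H s2 s1 (Hin s2) (Hin s1) Hl). lra. }
  assert (Hcont : continuity x).
  { intros t. apply (derive_cont _ _ _ (sol_dx _ _ _ _ _ _ _ H (Hin t))). }
  destruct (sol_basic _ _ _ _ _ _ H) as [_ [_ [Hx0 _]]].
  assert (Hsurj0 : forall r, 0 <= r -> exists s, x s = r).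
  { intros r Hr. destruct (x_unbounded _ _ _ _ _ Hal H r) as [s0 [Hs0 Hxs0]].
    destruct (IVT_gen x 0 s0 r Hcont) as [s [_ Hs]].
    { rewrite Hx0. rewrite Rmin_left by lra. rewrite Rmax_right by lra. lra. }
    exists s; auto. }
  assert (Hsurj : forall r, exists s, x s = r).
  { intros r. destruct (Rle_or_lt 0 r). auto.
    destruct (Hsurj0 (-r) ltac:(lra)) as [s Hs]. exists (-s). destruct (Hsym (-s)) as [A _].
    rewrite Ropp_involutive in A. lra. }
  split; [|split].
  - intros s1 s2 _ _. apply Hinj.
  - intros r. destruct (Hsurj r) as [s Hs]. exists s; auto.
  - intros p1 p2. set (r := sqrt (p1^2 + p2^2)).
    assert (Hr2 : r * r = p1^2 + p2^2) by (apply sqrt_sqrt; nra).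
    destruct (Hsurj r) as [s0 Hs0].
    exists (z s0). split.
    + destruct (polar p1 p2) as [t [Ht1 Ht2]]. exists s0, t. fold r in Ht1, Ht2. rewrite Hs0. auto.
    + intros s t _ E1 E2.
      assert (Hxs : x s * x s = r * r).
      { rewrite Hr2, <- E1, <- E2. pose proof (sin2_cos2 t). unfold Rsqr in H0. nra. }
      assert (Hr0 : 0 <= r) by apply sqrt_pos.
      destruct (Rle_or_lt 0 (x s)).
      * assert (x s = r) by nra. rewrite (Hinj s s0) by congruence. auto.
      * assert (x s = - r) by nra. destruct (Hsym s) as [A B].
        assert (x (-s) = r) by lra. rewrite <- B. rewrite (Hinj (-s) s0) by congruence. auto.
Qed.
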